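(* Let $N\ge2$ and let $f\in C(\mathbb{T}^N)$ be constant on diagonal orbits, i.e. $f(ux_1,\ldots,ux_N)=f(x)$ for all $x\in\mathbb{T}^N$ and $|u|=1$. Then $\|f-f*\sigma_n^{N-1}\|_\infty\to0$ as $n\to\infty$, where $(f*\sigma)(x)=\int_{\mathbb{T}^N}f(y)\sigma(xy^{-1})\,\mathrm{d}m(y)$.
   Context: $\mathbb{T}^N=\{x\in\mathbb{C}^N:|x_j|=1\}$ with normalized Haar measure $\mathrm{d}m=(2\pi)^{-N}\mathrm{d}\theta_1\cdots\mathrm{d}\theta_N$, $x_j=e^{\mathrm{i}\theta_j}$; $xy^{-1}$ is coordinatewise. $(t)_m=\prod_{i=1}^m(t+i-1)$. $\boldsymbol{Z}_{N,k}=\{\alpha\in\mathbb{Z}^N:\sum_i\alpha_i=0,\ \sum_i|\alpha_i|=2k\}$, $S_k(x)=\sum_{\alpha\in\boldsymbol{Z}_{N,k}}x^\alpha$, $\sigma_n^\delta(x)=\sum_{k=0}^n\frac{(-n)_k}{(-n-\delta)_k}S_k(x)$. *)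

(* Defs.v *)
From Stdlib Require Import Reals Lra ZArith List ClassicalEpsilon.
Open Scope R_scope.

(* Points of T^N are parametrised by angles: theta : nat -> R, x_j = exp(i theta_j),
   only coordinates j < N are relevant.  Complex numbers are pairs (re, im). *)

(* total Riemann integral on [a,b]: the value of RiemannInt when g is integrable *)
Definition Rint (g : R -> R) (a b : R) : R :=
  epsilon (inhabits 0) (fun I => exists pr : Riemann_integrable g a b, RiemannInt pr = I).

Definition upd (th : nat -> R) (j : nat) (t : R) : nat -> R :=
  fun i => if Nat.eqb i j then t else th i.

(* Integral against normalized Haar measure dm on T^N, computed as the iterated
   integral (2 pi)^{-N} int_0^{2pi} ... int_0^{2pi} g dtheta_0 ... dtheta_{N-1}
   (coordinates >= N are taken from th0). *)
Fixpoint IntTorus (n : nat) (g : (nat -> R) -> R) (th0 : nat -> R) : R :=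
  match n with
  | O => g th0
  | S m => / (2 * PI) * Rint (fun t => IntTorus m g (upd th0 m t)) 0 (2 * PI)
  end.

Definition haar_int (N : nat) (g : (nat -> R) -> R) : R := IntTorus N g (fun _ => 0).

Fixpoint poch (t : R) (m : nat) : R :=
  match m with
  | O => 1
  | S k => poch t k * (t + INR k)
  end.

Definition zrange (B : nat) : list Z :=
  map (fun i => (Z.of_nat i - Z.of_nat B)%Z) (seq 0 (2 * B + 1)).

Fixpoint boxes (n B : nat) : list (list Z) :=
  match n with
  | O => nil :: nil
  | S m => flat_map (fun a => map (cons a) (boxes m B)) (zrange B)
  end.

Definition inZNk (k : nat) (al : list Z) : bool :=
  Z.eqb (fold_right Z.add 0%Z al) 0%Z &&
  Z.eqb (fold_right Z.add 0%Z (map Z.abs al)) (2 * Z.of_nat k)%Z.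

(* Z_{N,k} as a duplicate-free list; every element satisfies |alpha_i| <= 2k *)
Definition ZNk (N k : nat) : list (list Z) := filter (inZNk k) (boxes N (2 * k)).

Fixpoint dotZ (al : list Z) (th : nat -> R) (i : nat) : R :=
  match al with
  | nil => 0
  | a :: r => IZR a * th i + dotZ r th (S i)
  end.

Definition sumR (l : list R) : R := fold_right Rplus 0 l.

(* S_k(x) = sum_{alpha in Z_{N,k}} x^alpha, x^alpha = exp(i alpha.theta) *)
Definition S_re (N k : nat) (th : nat -> R) : R :=
  sumR (map (fun al => cos (dotZ al th 0)) (ZNk N k)).
Definition S_im (N k : nat) (th : nat -> R) : R :=
  sumR (map (fun al => sin (dotZ al th 0)) (ZNk N k)).

Definition coefs (n : nat) (delta : R) (k : nat) : R :=
  poch (- INR n) k / poch (- INR n - delta) k.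

Definition sigma_re (N n : nat) (delta : R) (th : nat -> R) : R :=
  sumR (map (fun k => coefs n delta k * S_re N k th) (seq 0 (S n))).
Definition sigma_im (N n : nat) (delta : R) (th : nat -> R) : R :=
  sumR (map (fun k => coefs n delta k * S_im N k th) (seq 0 (S n))).

(* coordinatewise x y^{-1} in angles *)
Definition subang (th ph : nat -> R) : nat -> R := fun i => th i - ph i.

(* (f * sigma)(x) = int f(y) sigma(x y^{-1}) dm(y), f = fr + i fi *)
Definition conv_re (N n : nat) (delta : R) (fr fi : (nat -> R) -> R) (th : nat -> R) : R :=
  haar_int N (fun ph => fr ph * sigma_re N n delta (subang th ph)
                        - fi ph * sigma_im N n delta (subang th ph)).
Definition conv_im (N n : nat) (delta : R) (fr fi : (nat -> R) -> R) (th : nat -> R) : R :=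
  haar_int N (fun ph => fr ph * sigma_im N n delta (subang th ph)
                        + fi ph * sigma_re N n delta (subang th ph)).

Definition torus_fun (N : nat) (g : (nat -> R) -> R) : Prop :=
  (forall th th', (forall i, (i < N)%nat -> th i = th' i) -> g th = g th') /\
  (forall th j, (j < N)%nat -> g (upd th j (th j + 2 * PI)) = g th) /\
  (forall th eps, 0 < eps -> exists del, 0 < del /\
     forall th', (forall i, (i < N)%nat -> Rabs (th' i - th i) < del) ->
       Rabs (g th' - g th) < eps).

(* diagonal shift (u x_1, ..., u x_N), u = exp(i t) *)
Definition diag_shift (th : nat -> R) (t : R) : nat -> R := fun i => th i + t.

(* Main.v *)
Require Import Defs.
From Stdlib Require Import Reals Lra Lia ZArith List Permutation Arith ClassicalEpsilon Classical FunctionalExtensionality.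
Open Scope R_scope.

Lemma sumR_app l1 l2 : sumR (l1 ++ l2) = sumR l1 + sumR l2.
Proof. induction l1; simpl; [lra| rewrite IHl1; lra]. Qed.

Lemma sumR_map_ext {A} (f g : A -> R) l :
  (forall x, In x l -> f x = g x) -> sumR (map f l) = sumR (map g l).
Proof.
  induction l; simpl; intros H; auto.
  rewrite H by auto. rewrite IHl; auto.
Qed.

Lemma sumR_map_plus {A} (f g : A -> R) l :
  sumR (map (fun x => f x + g x) l) = sumR (map f l) + sumR (map g l).
Proof. induction l; simpl; [lra| rewrite IHl; lra]. Qed.

Lemma sumR_map_scal {A} (c : R) (f : A -> R) l :
  sumR (map (fun x => c * f x) l) = c * sumR (map f l).
Proof. induction l; simpl; [lra| rewrite IHl; lra]. Qed.

Lemma sumR_map_0 {A} (l : list A) : sumR (map (fun _ => 0) l) = 0.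
Proof. induction l; simpl; [lra| rewrite IHl; lra]. Qed.

Lemma sumR_map_opp {A} (f : A -> R) l :
  sumR (map (fun x => - f x) l) = - sumR (map f l).
Proof. induction l; simpl; [lra| rewrite IHl; lra]. Qed.

Lemma sumR_le {A} (f g : A -> R) l :
  (forall x, In x l -> f x <= g x) -> sumR (map f l) <= sumR (map g l).
Proof.
  induction l; simpl; intros H; [lra|].
  assert (f a <= g a) by auto. assert (sumR (map f l) <= sumR (map g l)) by auto. lra.
Qed.

Lemma sumR_nonneg {A} (f : A -> R) l :
  (forall x, In x l -> 0 <= f x) -> 0 <= sumR (map f l).
Proof.
  intros H. rewrite <- (sumR_map_0 l). apply sumR_le. auto.
Qed.

Lemma sumR_abs {A} (f : A -> R) l :
  Rabs (sumR (map f l)) <= sumR (map (fun x => Rabs (f x)) l).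
Proof.
  induction l; simpl. rewrite Rabs_R0; lra.
  eapply Rle_trans. apply Rabs_triang. lra.
Qed.

Lemma sumR_flat_map {A B} (F : B -> R) (g : A -> list B) l :
  sumR (map F (flat_map g l)) = sumR (map (fun a => sumR (map F (g a))) l).
Proof.
  induction l; simpl; auto. rewrite map_app, sumR_app, IHl. reflexivity.
Qed.

Lemma sumR_map_map {A B} (F : B -> R) (g : A -> B) l :
  sumR (map F (map g l)) = sumR (map (fun a => F (g a)) l).
Proof. rewrite map_map. reflexivity. Qed.

Lemma sumR_exchange {A B} (F : A -> B -> R) l1 l2 :
  sumR (map (fun x => sumR (map (fun y => F x y) l2)) l1) =
  sumR (map (fun y => sumR (map (fun x => F x y) l1)) l2).
Proof.
  induction l1; simpl.
  - rewrite sumR_map_0. reflexivity.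
  - rewrite IHl1. rewrite <- sumR_map_plus. reflexivity.
Qed.

Lemma sumR_mult_sum {A B} (f : A -> R) (g : B -> R) l1 l2 :
  sumR (map f l1) * sumR (map g l2) =
  sumR (map (fun x => sumR (map (fun y => f x * g y) l2)) l1).
Proof.
  induction l1; simpl; [lra|].
  rewrite Rmult_plus_distr_r, IHl1. f_equal.
  rewrite sumR_map_scal. reflexivity.
Qed.

Lemma sumR_indicator {A} (dec : forall x y : A, {x = y} + {x <> y}) (G : A -> R) U x :
  NoDup U -> In x U ->
  sumR (map (fun u => if dec u x then G u else 0) U) = G x.
Proof.
  induction U as [|a U IH]; simpl; intros HN HI; [contradiction|].
  inversion HN; subst.
  destruct HI as [<-|HI].
  - destruct (dec a a) as [_|C]; [|congruence].
    rewrite (sumR_map_ext _ (fun _ => 0)). rewrite sumR_map_0. lra.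
    intros u Hu. destruct (dec u a); [subst; contradiction|reflexivity].
  - destruct (dec a x); [subst; contradiction|]. rewrite IH; auto. lra.
Qed.

Lemma regroup {A} (dec : forall x y : A, {x = y} + {x <> y}) (F : A -> R) U L :
  NoDup U -> incl L U ->
  sumR (map F L) = sumR (map (fun u => INR (count_occ dec L u) * F u) U).
Proof.
  intros HN. induction L as [|x L IH]; simpl; intros Hinc.
  - rewrite (sumR_map_ext _ (fun _ => 0)). now rewrite sumR_map_0.
    intros; simpl; lra.
  - rewrite IH by (intros y Hy; apply Hinc; simpl; auto).
    rewrite (sumR_map_ext (fun u => INR (if dec x u then S (count_occ dec L u) else count_occ dec L u) * F u)
             (fun u => (if dec u x then F u else 0) + INR (count_occ dec L u) * F u)).
    + rewrite sumR_map_plus, sumR_indicator; auto. apply Hinc; simpl; auto.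
    + intros u _. destruct (dec x u), (dec u x); subst; try congruence.
      rewrite S_INR; lra. lra.
Qed.

Lemma NoDup_flat_map_disj {A B} (g : A -> list B) l :
  NoDup l -> (forall a, In a l -> NoDup (g a)) ->
  (forall a a' x, In a l -> In a' l -> In x (g a) -> In x (g a') -> a = a') ->
  NoDup (flat_map g l).
Proof.
  induction l as [|a l IH]; simpl; intros HN Hg Hd; [constructor|].
  inversion HN; subst.
  apply NoDup_app.
  - auto.
  - apply IH; auto. intros a0 a' x Ha0 Ha'; apply Hd; auto.
  - intros x Hx Hx'. apply in_flat_map in Hx'. destruct Hx' as [a' [Ha' Hx'']].
  assert (a = a') by (apply (Hd a a' x); auto). subst. contradiction.
Qed.

Lemma NoDup_map_on {A B} (f : A -> B) l :
  NoDup l -> (forall x y, In x l -> In y l -> f x = f y -> x = y) -> NoDup (map f l).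
Proof.
  induction l as [|a l IH]; simpl; intros HN Hi; constructor.
  - intros Hin. apply in_map_iff in Hin. destruct Hin as [y [Hy Hy']].
    inversion HN; subst. assert (y = a) by (apply Hi; auto). subst. contradiction.
  - inversion HN; subst. apply IH; auto.
Qed.

Lemma count_occ_map_filter {A B} (decB : forall x y : B, {x = y} + {x <> y}) (f : A -> B) L u :
  count_occ decB (map f L) u = length (filter (fun p => if decB (f p) u then true else false) L).
Proof.
  induction L; simpl; auto. destruct (decB (f a) u); simpl; auto.
Qed.

Definition zsum (l : list Z) : Z := fold_right Z.add 0%Z l.
Definition vpos (u : list Z) := map (Z.max 0) u.
Definition vneg (u : list Z) := map (fun x => Z.max 0 (- x)) u.
Fixpoint vsub (a b : list Z) : list Z :=
  match a, b with x :: a', y :: b' => (x - y)%Z :: vsub a' b' | _, _ => nil end.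
Fixpoint vadd (a b : list Z) : list Z :=
  match a, b with x :: a', y :: b' => (x + y)%Z :: vadd a' b' | _, _ => nil end.
Fixpoint vmin (a b : list Z) : list Z :=
  match a, b with x :: a', y :: b' => Z.min x y :: vmin a' b' | _, _ => nil end.

Definition ldec := list_eq_dec Z.eq_dec.

Lemma In_zrange B z : In z (zrange B) <-> (Z.abs z <= Z.of_nat B)%Z.
Proof.
  unfold zrange. rewrite in_map_iff. split.
  - intros [i [<- Hi]]. apply in_seq in Hi. lia.
  - intros H. exists (Z.to_nat (z + Z.of_nat B)). split. lia. apply in_seq. lia.
Qed.

Lemma NoDup_zrange B : NoDup (zrange B).
Proof.
  unfold zrange. apply NoDup_map_on. apply seq_NoDup. intros x y _ _ H. lia.
Qed.

Lemma In_boxes n B v :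
  In v (boxes n B) <-> (length v = n /\ Forall (fun z => Z.abs z <= Z.of_nat B)%Z v).
Proof.
  revert v; induction n; intros v; simpl.
  - split. intros [<-|[]]. split; auto.
    intros [H _]. destruct v; simpl in H; try lia; auto.
  - rewrite in_flat_map. split.
    + intros [a [Ha Hv]]. apply in_map_iff in Hv. destruct Hv as [w [<- Hw]].
      apply IHn in Hw. apply In_zrange in Ha. destruct Hw. simpl. split; auto.
    + intros [Hl HF]. destruct v as [|a w]; simpl in Hl; try lia.
      inversion HF; subst. exists a. split. apply In_zrange; auto.
      apply in_map. apply IHn. split; auto.
Qed.

Lemma NoDup_boxes n B : NoDup (boxes n B).
Proof.
  induction n; simpl. repeat constructor. auto.
  apply NoDup_flat_map_disj. apply NoDup_zrange.
  - intros a _. apply NoDup_map_on; auto. intros x y _ _ H; inversion H; auto.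
  - intros a a' x _ _ H1 H2. apply in_map_iff in H1, H2.
    destruct H1 as [? [<- _]]. destruct H2 as [? [H _]]. inversion H; auto.
Qed.

Lemma In_ZNk N k v : In v (ZNk N k) <-> In v (boxes N (2 * k)) /\ inZNk k v = true.
Proof. unfold ZNk. apply filter_In. Qed.

Lemma NoDup_ZNk N k : NoDup (ZNk N k).
Proof. apply NoDup_filter, NoDup_boxes. Qed.

Lemma zsum_nonneg l : Forall (fun z => 0 <= z)%Z l -> (0 <= zsum l)%Z.
Proof. induction 1; unfold zsum in *; simpl; lia. Qed.

Fixpoint comps (m r : nat) : list (list Z) :=
  match m with
  | O => if Nat.eqb r 0 then nil :: nil else nil
  | S m' => flat_map (fun a => map (cons (Z.of_nat a)) (comps m' (r - a))) (seq 0 (S r))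
  end.

Lemma In_comps m r c :
  In c (comps m r) <-> (length c = m /\ Forall (fun z => 0 <= z)%Z c /\ zsum c = Z.of_nat r).
Proof.
  revert r c; induction m; intros r c.
  - simpl. destruct (Nat.eqb_spec r 0); simpl.
    + subst. split. intros [<-|[]]. simpl; auto.
      intros [H _]. destruct c; simpl in H; try lia; auto.
    + split; [intros []|]. intros [H [_ H2]]. destruct c; simpl in *; try lia.
  - cbn [comps]. rewrite in_flat_map. split.
    + intros [a [Ha Hc]]. apply in_map_iff in Hc. destruct Hc as [w [<- Hw]].
      apply IHm in Hw. apply in_seq in Ha. destruct Hw as [H1 [H2 H3]].
      simpl. unfold zsum in *. simpl. split; auto. split. constructor; auto; lia. lia.
    + intros [Hl [HF Hs]]. destruct c as [|a w]; simpl in Hl; try lia.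
      inversion HF; subst. pose proof (zsum_nonneg _ H2). unfold zsum in *; simpl in Hs.
      exists (Z.to_nat a). split. apply in_seq. lia.
      assert (Ea : a = Z.of_nat (Z.to_nat a)) by lia. rewrite Ea at 1.
      apply in_map. apply IHm. split. lia. split. auto. unfold zsum. lia.
Qed.

Lemma NoDup_comps m r : NoDup (comps m r).
Proof.
  revert r; induction m; intros r.
  simpl; destruct (Nat.eqb r 0); repeat constructor; auto.
  cbn [comps].
  apply NoDup_flat_map_disj. apply seq_NoDup.
  - intros a _. apply NoDup_map_on; auto. intros x y _ _ H; inversion H; auto.
  - intros a a' x _ _ H1 H2. apply in_map_iff in H1, H2.
    destruct H1 as [? [<- _]]. destruct H2 as [? [H _]]. inversion H; lia.
Qed.

Lemma vsub_len a b : length (vsub a b) = Nat.min (length a) (length b).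
Proof. revert b; induction a; destruct b; simpl; auto. Qed.
Lemma vadd_len a b : length (vadd a b) = Nat.min (length a) (length b).
Proof. revert b; induction a; destruct b; simpl; auto. Qed.
Lemma vmin_len a b : length (vmin a b) = Nat.min (length a) (length b).
Proof. revert b; induction a; destruct b; simpl; auto. Qed.

Lemma zsum_vadd a b : length a = length b -> zsum (vadd a b) = (zsum a + zsum b)%Z.
Proof. revert b; induction a; destruct b; simpl; intros H; try discriminate; auto.
  unfold zsum in *; simpl. rewrite IHa; [lia|auto]. Qed.
Lemma zsum_vsub a b : length a = length b -> zsum (vsub a b) = (zsum a - zsum b)%Z.
Proof. revert b; induction a; destruct b; simpl; intros H; try discriminate; auto.
  unfold zsum in *; simpl. rewrite IHa; [lia|auto]. Qed.
Lemma zsum_pos_neg u : zsum u = (zsum (vpos u) - zsum (vneg u))%Z.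
Proof. induction u; unfold zsum in *; simpl; lia. Qed.
Lemma zsum_abs u : fold_right Z.add 0%Z (map Z.abs u) = (zsum (vpos u) + zsum (vneg u))%Z.
Proof. induction u; unfold zsum in *; simpl; lia. Qed.
Lemma vpos_nonneg u : Forall (fun z => 0 <= z)%Z (vpos u).
Proof. induction u; simpl; constructor; auto; lia. Qed.
Lemma vneg_nonneg u : Forall (fun z => 0 <= z)%Z (vneg u).
Proof. induction u; simpl; constructor; auto; lia. Qed.

Lemma decomp a b : length a = length b ->
  a = vadd (vpos (vsub a b)) (vmin a b) /\ b = vadd (vneg (vsub a b)) (vmin a b).
Proof. revert b; induction a; destruct b; simpl; intros H; try discriminate; auto.
  destruct (IHa b) as [E1 E2]; [lia|]. rewrite <- E1, <- E2. split; f_equal; lia. Qed.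

Lemma vmin_nonneg a b : Forall (fun z => 0 <= z)%Z a -> Forall (fun z => 0 <= z)%Z b ->
  Forall (fun z => 0 <= z)%Z (vmin a b).
Proof. revert b; induction a; destruct b; simpl; intros H1 H2; auto.
  inversion H1; inversion H2; subst. constructor; auto. lia. Qed.

Lemma vadd_nonneg a b : Forall (fun z => 0 <= z)%Z a -> Forall (fun z => 0 <= z)%Z b ->
  Forall (fun z => 0 <= z)%Z (vadd a b).
Proof. revert b; induction a; destruct b; simpl; intros H1 H2; auto.
  inversion H1; inversion H2; subst. constructor; auto. lia. Qed.

Lemma vsub_pos_neg u c : length c = length u ->
  vsub (vadd (vpos u) c) (vadd (vneg u) c) = u.
Proof. revert c; induction u; destruct c; simpl; intros H; try discriminate; auto.
  rewrite IHu by lia. f_equal. lia. Qed.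

Lemma vadd_inj p c c' : length c = length p -> length c' = length p ->
  vadd p c = vadd p c' -> c = c'.
Proof. revert c c'; induction p; destruct c, c'; simpl; intros H1 H2 H; try discriminate; auto.
  inversion H. f_equal. lia. apply IHp; auto. Qed.

Lemma NoDup_list_prod {A B} (l : list A) (l' : list B) :
  NoDup l -> NoDup l' -> NoDup (list_prod l l').
Proof.
  induction l; simpl; intros H1 H2. constructor.
  inversion H1; subst. apply NoDup_app.
  - apply NoDup_map_on; auto. intros x y _ _ H; inversion H; auto.
  - auto.
  - intros [x y] Hx Hy. apply in_map_iff in Hx. destruct Hx as [? [E _]]. inversion E; subst.
    apply in_prod_iff in Hy. destruct Hy; contradiction.
Qed.

Definition pdiff (p : list Z * list Z) := vsub (fst p) (snd p).

Lemma filter_all_false {A} (P : A -> bool) L : (forall x, In x L -> P x = false) -> filter P L = nil.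
Proof. induction L; simpl; intros H; auto. rewrite H by auto. auto. Qed.

Lemma fiber_nec N n u p : In p (list_prod (comps N n) (comps N n)) ->
  (if ldec (pdiff p) u then true else false) = true ->
  zsum u = 0%Z /\ (zsum (vpos u) <= Z.of_nat n)%Z.
Proof.
  destruct p as [a b]. rewrite in_prod_iff. intros [Ha Hb] HP. unfold pdiff in HP; simpl in HP.
  destruct (ldec (vsub a b) u) as [E|]; [|discriminate].
  apply In_comps in Ha, Hb. destruct Ha as [La [Na Sa]]. destruct Hb as [Lb [Nb Sb]].
  destruct (decomp a b) as [Ea Eb]; [lia|]. subst u.
  pose proof (zsum_nonneg _ (vmin_nonneg _ _ Na Nb)).
  rewrite zsum_vsub by lia. split. lia.
  rewrite Ea, zsum_vadd in Sa. lia.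
  unfold vpos; rewrite length_map, vmin_len, vsub_len; lia.
Qed.

Lemma fiber_count N n u : length u = N ->
  count_occ ldec (map pdiff (list_prod (comps N n) (comps N n))) u =
  if (Z.eqb (zsum u) 0 && Z.leb (zsum (vpos u)) (Z.of_nat n))%bool
  then length (comps N (n - Z.to_nat (zsum (vpos u)))) else 0%nat.
Proof.
  intros Hu. rewrite count_occ_map_filter.
  set (P := fun p : list Z * list Z => if ldec (pdiff p) u then true else false).
  set (k := Z.to_nat (zsum (vpos u))).
  pose proof (zsum_nonneg _ (vpos_nonneg u)) as Hk0.
  destruct (Z.eqb_spec (zsum u) 0) as [Hz|Hz];
  destruct (Z.leb_spec (zsum (vpos u)) (Z.of_nat n)) as [Hle|Hle]; simpl.
  - set (g := fun c => (vadd (vpos u) c, vadd (vneg u) c)).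
    transitivity (length (map g (comps N (n - k)))); [|apply length_map].
    apply Permutation_length. apply NoDup_Permutation.
    + apply NoDup_filter. apply NoDup_list_prod; apply NoDup_comps.
    + apply NoDup_map_on. apply NoDup_comps. intros x y Hx Hy E.
      apply In_comps in Hx, Hy. unfold g in E. inversion E.
      apply (vadd_inj (vpos u)); auto; unfold vpos; rewrite length_map; lia.
    + intros [a b]. rewrite filter_In, in_prod_iff. split.
      * intros [[Ha Hb] HP]. unfold P, pdiff in HP; simpl in HP.
        destruct (ldec (vsub a b) u) as [E|]; [|discriminate].
        apply In_comps in Ha, Hb. destruct Ha as [La [Na Sa]]. destruct Hb as [Lb [Nb Sb]].
        destruct (decomp a b) as [Ea Eb]; [lia|]. rewrite E in Ea, Eb.
        apply in_map_iff. exists (vmin a b). split. unfold g. rewrite <- Ea, <- Eb. auto.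
        apply In_comps. rewrite vmin_len. split. lia. split. apply vmin_nonneg; auto.
        rewrite Ea, zsum_vadd in Sa. unfold k. lia.
        unfold vpos; rewrite length_map, vmin_len; lia.
      * intros Hin. apply in_map_iff in Hin. destruct Hin as [c [E Hc]]. unfold g in E.
        inversion E; subst a b. apply In_comps in Hc. destruct Hc as [Lc [Nc Sc]].
        pose proof (zsum_pos_neg u).
        assert (Lp : length (vpos u) = length c) by (unfold vpos; rewrite length_map; lia).
        assert (Ln : length (vneg u) = length c) by (unfold vneg; rewrite length_map; lia).
        split. split; apply In_comps; rewrite vadd_len; (split; [lia|split]).
        apply vadd_nonneg; auto. apply vpos_nonneg.
        rewrite zsum_vadd by auto. unfold k in Sc. lia.
        apply vadd_nonneg; auto. apply vneg_nonneg.
        rewrite zsum_vadd by auto. unfold k in Sc. lia.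
        unfold P, pdiff; simpl. rewrite vsub_pos_neg by lia.
        destruct (ldec u u); congruence.
  - rewrite filter_all_false; auto. intros p Hp. destruct (P p) eqn:E; auto.
    apply (fiber_nec N n u p) in E; auto. lia.
  - rewrite filter_all_false; auto. intros p Hp. destruct (P p) eqn:E; auto.
    apply (fiber_nec N n u p) in E; auto. lia.
  - rewrite filter_all_false; auto. intros p Hp. destruct (P p) eqn:E; auto.
    apply (fiber_nec N n u p) in E; auto. lia.
Qed.

Definition Lc m r := length (comps m r).

Fixpoint nsum (l : list nat) : nat := match l with nil => 0%nat | x :: l => (x + nsum l)%nat end.

Lemma length_flat_map' {A B} (g : A -> list B) l :
  length (flat_map g l) = nsum (map (fun x => length (g x)) l).
Proof. induction l; simpl; auto. rewrite length_app, IHl. auto. Qed.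

Lemma Lc_S m r : Lc (S m) r = nsum (map (fun a => Lc m (r - a)) (seq 0 (S r))).
Proof.
  unfold Lc; cbn [comps]. rewrite length_flat_map'. f_equal. apply map_ext. intros. apply length_map.
Qed.

Lemma nsum_map_seq_shift (F : nat -> nat) s len :
  nsum (map F (seq (S s) len)) = nsum (map (fun a => F (S a)) (seq s len)).
Proof. rewrite <- seq_shift, map_map. reflexivity. Qed.

Lemma Lc_pascal m r : Lc (S m) (S r) = (Lc (S m) r + Lc m (S r))%nat.
Proof.
  rewrite (Lc_S m (S r)), (Lc_S m r).
  change (seq 0 (S (S r))) with (0 :: seq 1 (S r))%nat. cbn [map nsum]. rewrite nsum_map_seq_shift.
  rewrite Nat.sub_0_r. rewrite (map_ext (fun a => Lc m (S r - S a)) (fun a => Lc m (r - a))).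
  lia. intros a. reflexivity.
Qed.

Lemma Lc_0_S r : Lc 0 (S r) = 0%nat.
Proof. reflexivity. Qed.

Lemma Lc_S_0 m : Lc (S m) 0 = 1%nat.
Proof.
  induction m. reflexivity. rewrite Lc_S.
  change (seq 0 1) with (0 :: nil)%nat. cbn [map nsum]. rewrite Nat.sub_0_r, IHm. reflexivity.
Qed.

Lemma Lc_1 r : Lc 1 r = 1%nat.
Proof. induction r. reflexivity. rewrite Lc_pascal, IHr, Lc_0_S. auto. Qed.

Lemma fact_succ n : fact (S n) = (S n * fact n)%nat.
Proof. reflexivity. Qed.

Lemma Lc_closed m r : (Lc (S m) r * fact r * fact m = fact (r + m))%nat.
Proof.
  revert r; induction m; intros r.
  - rewrite Lc_1, Nat.add_0_r. change (fact 0) with 1%nat. lia.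
  - induction r.
    + rewrite Lc_S_0. change (fact 0) with 1%nat. rewrite Nat.add_0_l. lia.
    + rewrite Lc_pascal.
      specialize (IHm (S r)).
      replace (S r + S m)%nat with (S (r + S m)) by lia.
      replace (S r + m)%nat with (r + S m)%nat in IHm by lia.
      rewrite (fact_succ (r + S m)).
      remember (fact (r + S m)) as X.
      rewrite (fact_succ r) in *. rewrite (fact_succ m) in *. nia.
Qed.

Lemma fact_pos' n : (0 < fact n)%nat.
Proof. apply lt_O_fact. Qed.

Lemma Lc_pos m r : (0 < Lc (S m) r)%nat.
Proof.
  pose proof (Lc_closed m r). pose proof (fact_pos' (r + m)).
  destruct (Lc (S m) r); simpl in *; lia.
Qed.

Lemma Lc_ratio m r : (S r * Lc (S m) (S r) = (S r + m) * Lc (S m) r)%nat.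
Proof.
  pose proof (Lc_closed m r) as H1. pose proof (Lc_closed m (S r)) as H2.
  rewrite fact_succ in H2. replace (S r + m)%nat with (S (r + m)) in H2 by lia.
  rewrite fact_succ in H2. rewrite <- H1 in H2.
  pose proof (fact_pos' r). pose proof (fact_pos' m).
  apply (Nat.mul_cancel_r _ _ (fact r * fact m)). nia.
  replace (S r + m)%nat with (S (r+m)) by lia. nia.
Qed.

Lemma poch_S t k : poch t (S k) = poch t k * (t + INR k).
Proof. reflexivity. Qed.

Lemma poch_neg_nz n m k : (k <= n)%nat -> poch (- INR n - INR m) k <> 0.
Proof.
  induction k; intros Hk; simpl. lra.
  apply Rmult_integral_contrapositive. split. apply IHk; lia.
  assert (INR k < INR n) by (apply lt_INR; lia). pose proof (pos_INR m). lra.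
Qed.

Lemma coefs_closed n m k : (k <= n)%nat ->
  coefs n (INR m) k = INR (Lc (S m) (n - k)) / INR (Lc (S m) n).
Proof.
  induction k; intros Hk.
  - unfold coefs; simpl. rewrite Nat.sub_0_r. field.
    apply not_0_INR. pose proof (Lc_pos m n). lia.
  - unfold coefs in *. rewrite !poch_S.
    assert (Hn : poch (- INR n - INR m) k <> 0) by (apply poch_neg_nz; lia).
    assert (Hd : - INR n - INR m + INR k <> 0).
    { assert (INR k < INR n) by (apply lt_INR; lia). pose proof (pos_INR m). lra. }
    assert (HL : INR (Lc (S m) n) <> 0) by (apply not_0_INR; pose proof (Lc_pos m n); lia).
    pose proof (IHk ltac:(lia)) as IH.
    pose proof (Lc_ratio m (n - S k)) as R.
    replace (S (n - S k)) with (n - k)%nat in R by lia.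
    apply (f_equal INR) in R. rewrite !mult_INR in R.
    rewrite plus_INR, minus_INR in R by lia.
    assert (Hp : INR n - INR k + INR m <> 0).
    { assert (INR k < INR n) by (apply lt_INR; lia). pose proof (pos_INR m). lra. }
    assert (Hl : INR (Lc (S m) (n - S k)) = (INR n - INR k) * INR (Lc (S m) (n - k)) / (INR n - INR k + INR m)).
    { apply (Rmult_eq_reg_l (INR n - INR k + INR m)); auto. rewrite <- R. field. auto. }
    rewrite Hl. 
    replace (poch (- INR n) k * (- INR n + INR k) / (poch (- INR n - INR m) k * (- INR n - INR m + INR k)))
      with (poch (- INR n) k / poch (- INR n - INR m) k * ((INR n - INR k) / (INR n - INR k + INR m)))
      by (field; split; [lra|auto]).
    rewrite IH. field. split; auto.
Qed.

Lemma count_NoDup {A} (dec : forall x y : A, {x = y} + {x <> y}) l x :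
  NoDup l -> count_occ dec l x = if in_dec dec x l then 1%nat else 0%nat.
Proof.
  intros HN. destruct (in_dec dec x l).
  - apply NoDup_count_occ'; auto.
  - apply count_occ_not_In; auto.
Qed.

Lemma abs_le_sum u : Forall (fun z => Z.abs z <= fold_right Z.add 0 (map Z.abs u))%Z u.
Proof.
  induction u; simpl; constructor. pose proof (Z.abs_nonneg a).
  assert (0 <= fold_right Z.add 0 (map Z.abs u))%Z.
  { clear. induction u; simpl; [lia|]. pose proof (Z.abs_nonneg a); lia. }
  lia.
  eapply Forall_impl; [|exact IHu]. intros z Hz. simpl in *. pose proof (Z.abs_nonneg a). lia.
Qed.

Lemma Forall_mono (P Q : Z -> Prop) l : (forall z, P z -> Q z) -> Forall P l -> Forall Q l.
Proof. intros; eapply Forall_impl; eauto. Qed.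

Lemma Forall_vsub (P Q R : Z -> Prop) a b : (forall x y, P x -> Q y -> R (x - y)%Z) ->
  Forall P a -> Forall Q b -> Forall R (vsub a b).
Proof.
  intros H HA; revert b; induction HA; intros b HB; destruct b; simpl; constructor;
  inversion HB; subst; auto.
Qed.

Lemma le_zsum a : Forall (fun z => 0 <= z)%Z a -> Forall (fun z => 0 <= z <= zsum a)%Z a.
Proof.
  induction 1; constructor. pose proof (zsum_nonneg _ H0). unfold zsum in *; simpl; lia.
  eapply Forall_mono; [|exact IHForall]. intros z Hz. unfold zsum in *; simpl; lia.
Qed.

Lemma In_ZNk_iff N k u : length u = N ->
  (In u (ZNk N k) <-> (zsum u = 0 /\ zsum (vpos u) = Z.of_nat k)%Z).
Proof.
  intros Hl. rewrite In_ZNk, In_boxes. unfold inZNk.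
  rewrite Bool.andb_true_iff, !Z.eqb_eq. fold (zsum u). rewrite zsum_abs.
  pose proof (zsum_pos_neg u). split.
  - intros [_ [H1 H2]]. lia.
  - intros [H1 H2]. split; [split; auto|split; lia].
    eapply Forall_mono; [|apply abs_le_sum]. intros z Hz. rewrite zsum_abs in Hz. lia.
Qed.

Lemma sum_seq_single (g : nat -> R) n k0 :
  sumR (map (fun k => if Nat.eq_dec k k0 then g k else 0) (seq 0 (S n))) =
  if le_dec k0 n then g k0 else 0.
Proof.
  destruct (le_dec k0 n).
  - apply (sumR_indicator Nat.eq_dec g). apply seq_NoDup. apply in_seq. lia.
  - rewrite (sumR_map_ext _ (fun _ => 0)). apply sumR_map_0.
    intros k Hk. apply in_seq in Hk. destruct (Nat.eq_dec k k0); auto. lia.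
Qed.

Lemma boxes_mono N B B' u : (B <= B')%nat -> In u (boxes N B) -> In u (boxes N B').
Proof.
  rewrite !In_boxes. intros H [H1 H2]. split; auto. eapply Forall_mono; [|exact H2].
  intros z Hz. simpl in *. lia.
Qed.

Lemma sigma_pairs m n (F : list Z -> R) :
  sumR (map (fun k => coefs n (INR m) k * sumR (map F (ZNk (S m) k))) (seq 0 (S n))) =
  / INR (Lc (S m) n) * sumR (map (fun p => F (pdiff p)) (list_prod (comps (S m) n) (comps (S m) n))).
Proof.
  set (N := S m). set (U := boxes N (2 * n)).
  assert (NU : NoDup U) by apply NoDup_boxes.
  rewrite (sumR_map_ext _ (fun k => sumR (map (fun u => (coefs n (INR m) k * INR (count_occ ldec (ZNk N k) u)) * F u) U))).
  2:{ intros k Hk. apply in_seq in Hk. rewrite (regroup ldec F U); auto.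
      rewrite <- sumR_map_scal. apply sumR_map_ext. intros; lra.
      intros u Hu. apply In_ZNk in Hu. destruct Hu as [Hu _]. unfold U.
      eapply boxes_mono; [|exact Hu]. lia. }
  rewrite sumR_exchange.
  rewrite <- (sumR_map_map (fun u => F u) pdiff).
  rewrite (regroup ldec F U); auto.
  2:{ intros u Hu. apply in_map_iff in Hu. destruct Hu as [[a b] [<- Hp]].
      apply in_prod_iff in Hp. destruct Hp as [Ha Hb].
      apply In_comps in Ha, Hb. destruct Ha as [La [Na Sa]]. destruct Hb as [Lb [Nb Sb]].
      unfold U. apply In_boxes. unfold pdiff; simpl. rewrite vsub_len. split. lia.
      apply le_zsum in Na, Nb. rewrite Sa in Na. rewrite Sb in Nb.
      eapply Forall_vsub; [|exact Na|exact Nb]. intros x y Hx Hy. simpl in *. lia. }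
  rewrite <- sumR_map_scal. apply sumR_map_ext. intros u Hu.
  assert (Lu : length u = N) by (apply In_boxes in Hu; tauto).
  transitivity (sumR (map (fun k => coefs n (INR m) k * INR (count_occ ldec (ZNk N k) u)) (seq 0 (S n))) * F u).
  { rewrite Rmult_comm, <- sumR_map_scal. apply sumR_map_ext; intros; lra. }
  rewrite <- Rmult_assoc. f_equal.
  rewrite fiber_count by auto.
  pose proof (zsum_nonneg _ (vpos_nonneg u)) as Hp0.
  set (k0 := Z.to_nat (zsum (vpos u))).
  destruct (Z.eqb_spec (zsum u) 0) as [Hz|Hz].
  - rewrite (sumR_map_ext _ (fun k => if Nat.eq_dec k k0 then coefs n (INR m) k else 0)).
    2:{ intros k _. rewrite count_NoDup by apply NoDup_ZNk.
        destruct (in_dec ldec u (ZNk N k)) as [H|H]; rewrite In_ZNk_iff in H by auto;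
        destruct (Nat.eq_dec k k0); unfold k0 in *; simpl; try lra; try lia; exfalso; apply H; lia. }
    rewrite sum_seq_single. simpl.
    destruct (le_dec k0 n), (Z.leb_spec (zsum (vpos u)) (Z.of_nat n)); unfold k0 in *; try lia.
    + rewrite coefs_closed by lia. unfold Rdiv. rewrite Rmult_comm. reflexivity.
    + simpl. lra.
  - rewrite (sumR_map_ext _ (fun k => 0)). rewrite sumR_map_0.
    destruct (Z.eqb_spec (zsum u) 0); try lia. simpl. lra.
    intros k _. rewrite count_NoDup by apply NoDup_ZNk.
    destruct (in_dec ldec u (ZNk N k)) as [H|H]; rewrite In_ZNk_iff in H by auto; try lia. simpl; lra.
Qed.

Lemma dotZ_vsub a b th i : length a = length b ->
  dotZ (vsub a b) th i = dotZ a th i - dotZ b th i.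
Proof.
  revert b i; induction a; destruct b; simpl; intros i H; try discriminate; [lra|].
  rewrite IHa by lia. rewrite minus_IZR. lra.
Qed.

Lemma sumR_list_prod {A B} (G : A -> B -> R) l1 l2 :
  sumR (map (fun p => G (fst p) (snd p)) (list_prod l1 l2)) =
  sumR (map (fun a => sumR (map (fun b => G a b) l2)) l1).
Proof.
  induction l1; simpl; auto. rewrite map_app, sumR_app, IHl1, map_map. reflexivity.
Qed.

Definition hc N n th := sumR (map (fun a => cos (dotZ a th 0)) (comps N n)).
Definition hs N n th := sumR (map (fun a => sin (dotZ a th 0)) (comps N n)).

Lemma sigma_re_formula m n th :
  sigma_re (S m) n (INR m) th = (hc (S m) n th ^ 2 + hs (S m) n th ^ 2) / INR (Lc (S m) n).
Proof.
  unfold sigma_re, S_re. rewrite (sigma_pairs m n (fun al => cos (dotZ al th 0))).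
  unfold pdiff. rewrite (sumR_list_prod (fun a b => cos (dotZ (vsub a b) th 0))).
  rewrite (sumR_map_ext _ (fun a => sumR (map (fun b => cos (dotZ a th 0) * cos (dotZ b th 0)
                                                + sin (dotZ a th 0) * sin (dotZ b th 0)) (comps (S m) n)))).
  2:{ intros a Ha. apply sumR_map_ext. intros b Hb. apply In_comps in Ha, Hb.
      rewrite dotZ_vsub by lia. apply cos_minus. }
  rewrite (sumR_map_ext _ (fun a => sumR (map (fun b => cos (dotZ a th 0) * cos (dotZ b th 0)) (comps (S m) n))
                                  + sumR (map (fun b => sin (dotZ a th 0) * sin (dotZ b th 0)) (comps (S m) n)))).
  2:{ intros; apply sumR_map_plus. }
  rewrite sumR_map_plus. unfold hc, hs. rewrite <- !sumR_mult_sum. unfold Rdiv. ring.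
Qed.

Lemma sigma_im_zero m n th : sigma_im (S m) n (INR m) th = 0.
Proof.
  unfold sigma_im, S_im. rewrite (sigma_pairs m n (fun al => sin (dotZ al th 0))).
  unfold pdiff. rewrite (sumR_list_prod (fun a b => sin (dotZ (vsub a b) th 0))).
  rewrite (sumR_map_ext _ (fun a => sumR (map (fun b => sin (dotZ a th 0) * cos (dotZ b th 0)
                                                + - (cos (dotZ a th 0) * sin (dotZ b th 0))) (comps (S m) n)))).
  2:{ intros a Ha. apply sumR_map_ext. intros b Hb. apply In_comps in Ha, Hb.
      rewrite dotZ_vsub by lia. rewrite sin_minus. ring. }
  rewrite (sumR_map_ext _ (fun a => sumR (map (fun b => sin (dotZ a th 0) * cos (dotZ b th 0)) (comps (S m) n))
                                  + - sumR (map (fun b => cos (dotZ a th 0) * sin (dotZ b th 0)) (comps (S m) n)))).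
  2:{ intros; rewrite sumR_map_plus, sumR_map_opp; reflexivity. }
  rewrite sumR_map_plus, sumR_map_opp. rewrite <- !sumR_mult_sum. ring.
Qed.

Lemma sigma_re_nonneg m n th : 0 <= sigma_re (S m) n (INR m) th.
Proof.
  rewrite sigma_re_formula. apply Rmult_le_pos.
  pose proof (pow2_ge_0 (hc (S m) n th)). pose proof (pow2_ge_0 (hs (S m) n th)). lra.
  apply Rlt_le, Rinv_0_lt_compat, lt_0_INR, Lc_pos.
Qed.

From Coquelicot Require Import Coquelicot.
Open Scope R_scope.

Definition clos (del : R) (th th' : nat -> R) := forall i, Rabs (th i - th' i) < del.
Definition UCg (g : (nat -> R) -> R) := forall eps, 0 < eps -> exists del, 0 < del /\
  forall th th', clos del th th' -> Rabs (g th - g th') <= eps.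

Lemma Rint_eq h a b : ex_RInt h a b -> Rint h a b = RInt h a b.
Proof.
  intros H. unfold Rint.
  assert (Hs : exists I, exists pr : Riemann_integrable h a b, RiemannInt pr = I).
  { exists (RiemannInt (ex_RInt_Reals_0 _ _ _ H)). eauto. }
  destruct (epsilon_spec (inhabits 0) _ Hs) as [pr Hpr]. rewrite <- Hpr.
  symmetry. apply RInt_Reals.
Qed.

Lemma close_upd del th j t t' : 0 < del -> Rabs (t - t') < del -> clos del (upd th j t) (upd th j t').
Proof.
  intros Hd Ht i. unfold upd. destruct (Nat.eqb i j); auto.
  rewrite Rminus_diag, Rabs_R0. auto.
Qed.

Lemma close_upd2 del th th' j t : clos del th th' -> clos del (upd th j t) (upd th' j t).
Proof.
  intros H i. unfold upd. destruct (Nat.eqb i j); auto.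
  rewrite Rminus_diag, Rabs_R0. specialize (H 0%nat). pose proof (Rabs_pos (th 0%nat - th' 0%nat)). lra.
Qed.

Lemma slice_cont g th0 j t : UCg g -> continuous (fun t => g (upd th0 j t)) t.
Proof.
  intros Hg. apply continuity_pt_filterlim.
  unfold continuity_pt, continue_in, limit1_in, limit_in. intros eps Heps.
  destruct (Hg (eps/2)) as [del [Hd H]]; [lra|].
  exists del. split; auto. intros x [_ Hx]. simpl in *. unfold R_dist in *.
  assert (Rabs (g (upd th0 j x) - g (upd th0 j t)) <= eps/2) by (apply H, close_upd; auto). lra.
Qed.

Lemma ex_slice g th0 j a b : UCg g -> ex_RInt (fun t => g (upd th0 j t)) a b.
Proof. intros Hg. apply (ex_RInt_continuous (V := R_CompleteNormedModule)). intros z _. apply slice_cont; auto. Qed.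

Lemma Rint_slice g th0 j a b : UCg g ->
  Rint (fun t => g (upd th0 j t)) a b = RInt (fun t => g (upd th0 j t)) a b.
Proof. intros; apply Rint_eq, ex_slice; auto. Qed.

Lemma IntTorus_S m g th :
  IntTorus (S m) g th = / (2 * PI) * Rint (fun t => IntTorus m g (upd th m t)) 0 (2 * PI).
Proof. reflexivity. Qed.

Lemma twoPI_pos : 0 < 2 * PI.
Proof. pose proof PI_RGT_0; lra. Qed.

Lemma IntTorus_close g (Hg : UCg g) m : forall eps del,
  (forall th th', clos del th th' -> Rabs (g th - g th') <= eps) ->
  forall th th', clos del th th' -> Rabs (IntTorus m g th - IntTorus m g th') <= eps.
Proof.
  induction m; intros eps del H th th' Hc; [simpl; auto|].
  assert (HU : UCg (IntTorus m g)).
  { intros e He. destruct (Hg e He) as [d [Hd Hd']]. exists d. split; auto.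
    intros; eapply IHm; eauto. }
  rewrite !IntTorus_S, !Rint_slice by auto.
  rewrite <- Rmult_minus_distr_l, Rabs_mult, Rabs_right by (apply Rle_ge, Rlt_le, Rinv_0_lt_compat, twoPI_pos).
  pose proof twoPI_pos.
  assert (E : RInt (fun t => IntTorus m g (upd th m t)) 0 (2 * PI) - RInt (fun t => IntTorus m g (upd th' m t)) 0 (2 * PI)
            = RInt (fun t => IntTorus m g (upd th m t) - IntTorus m g (upd th' m t)) 0 (2 * PI)).
  { symmetry. apply (RInt_minus (V := R_CompleteNormedModule)); apply ex_slice; auto. }
  rewrite E.
  assert (Rabs (RInt (fun t => IntTorus m g (upd th m t) - IntTorus m g (upd th' m t)) 0 (2 * PI)) <= (2*PI - 0) * eps).
  { apply abs_RInt_le_const. lra.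
    apply (ex_RInt_minus (V := R_CompleteNormedModule)); apply ex_slice; auto.
    intros t _. eapply IHm; eauto. apply close_upd2; auto. }
  apply (Rmult_le_reg_l (2 * PI)); auto. rewrite <- Rmult_assoc, Rinv_r by lra. lra.
Qed.

Lemma IntTorus_UC g m : UCg g -> UCg (IntTorus m g).
Proof.
  intros Hg e He. destruct (Hg e He) as [d [Hd Hd']]. exists d. split; auto.
  intros; eapply IntTorus_close; eauto.
Qed.

Lemma IntTorus_ext m g1 g2 th : (forall x, g1 x = g2 x) -> IntTorus m g1 th = IntTorus m g2 th.
Proof. intros H. replace g1 with g2; auto. symmetry; apply functional_extensionality; auto. Qed.

Lemma IntTorus_lin m : forall g1 g2 a th, UCg g1 -> UCg g2 ->
  IntTorus m (fun x => a * g1 x + g2 x) th = a * IntTorus m g1 th + IntTorus m g2 th.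
Proof.
  induction m; intros g1 g2 a th H1 H2; [reflexivity|].
  rewrite !IntTorus_S.
  replace (fun t => IntTorus m (fun x => a * g1 x + g2 x) (upd th m t))
    with (fun t => a * IntTorus m g1 (upd th m t) + IntTorus m g2 (upd th m t))
    by (apply functional_extensionality; intros; rewrite IHm; auto).
  pose proof (IntTorus_UC g1 m H1). pose proof (IntTorus_UC g2 m H2).
  rewrite !Rint_eq.
  - rewrite (RInt_plus (V := R_CompleteNormedModule)).
    rewrite (RInt_scal (V := R_CompleteNormedModule)).
    unfold plus, scal; simpl. unfold mult; simpl. ring.
    apply ex_slice; auto.
    apply (ex_RInt_scal (V := R_CompleteNormedModule)), ex_slice; auto.
    apply ex_slice; auto.
  - apply ex_slice; auto.
  - apply ex_slice; auto.
  - apply (ex_RInt_plus (V := R_CompleteNormedModule)).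
    apply (ex_RInt_scal (V := R_CompleteNormedModule)), ex_slice; auto.
    apply ex_slice; auto.
Qed.

Lemma IntTorus_const m c th : IntTorus m (fun _ => c) th = c.
Proof.
  revert th; induction m; intros th; [reflexivity|].
  rewrite IntTorus_S.
  replace (fun t => IntTorus m (fun _ => c) (upd th m t)) with (fun _ : R => c)
    by (apply functional_extensionality; intros; rewrite IHm; auto).
  rewrite Rint_eq. rewrite RInt_const. unfold scal; simpl. unfold mult; simpl.
  pose proof twoPI_pos. field. lra.
  apply ex_RInt_const.
Qed.

Lemma IntTorus_le m : forall g1 g2 th, UCg g1 -> UCg g2 -> (forall x, g1 x <= g2 x) ->
  IntTorus m g1 th <= IntTorus m g2 th.
Proof.
  induction m; intros g1 g2 th H1 H2 Hle; [simpl; auto|].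
  rewrite !IntTorus_S.
  pose proof (IntTorus_UC g1 m H1). pose proof (IntTorus_UC g2 m H2).
  rewrite !Rint_slice by auto.
  apply Rmult_le_compat_l. apply Rlt_le, Rinv_0_lt_compat, twoPI_pos.
  apply RInt_le. pose proof twoPI_pos; lra. apply ex_slice; auto. apply ex_slice; auto.
  intros; apply IHm; auto.
Qed.

Definition bnd (g : (nat -> R) -> R) := exists B, forall th, Rabs (g th) <= B.

Lemma UCg_const c : UCg (fun _ => c).
Proof. intros e He. exists 1. split. lra. intros. rewrite Rminus_diag, Rabs_R0. lra. Qed.

Lemma UCg_lin a g1 g2 : UCg g1 -> UCg g2 -> UCg (fun x => a * g1 x + g2 x).
Proof.
  intros H1 H2 e He.
  destruct (H1 (e / 2 / (Rabs a + 1))) as [d1 [Hd1 H1']].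
  { apply Rdiv_lt_0_compat. lra. pose proof (Rabs_pos a); lra. }
  destruct (H2 (e/2)) as [d2 [Hd2 H2']]; [lra|].
  exists (Rmin d1 d2). split. apply Rmin_pos; auto.
  intros th th' Hc.
  assert (C1 : clos d1 th th') by (intros i; specialize (Hc i); pose proof (Rmin_l d1 d2); lra).
  assert (C2 : clos d2 th th') by (intros i; specialize (Hc i); pose proof (Rmin_r d1 d2); lra).
  specialize (H1' _ _ C1). specialize (H2' _ _ C2).
  replace (a * g1 th + g2 th - (a * g1 th' + g2 th')) with (a * (g1 th - g1 th') + (g2 th - g2 th')) by ring.
  eapply Rle_trans. apply Rabs_triang. rewrite Rabs_mult.
  assert (Rabs a * Rabs (g1 th - g1 th') <= e / 2).
  { apply Rle_trans with ((Rabs a + 1) * (e / 2 / (Rabs a + 1))).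
    apply Rmult_le_compat; try apply Rabs_pos; lra.
    right. field. pose proof (Rabs_pos a); lra. }
  lra.
Qed.

Lemma UCg_plus g1 g2 : UCg g1 -> UCg g2 -> UCg (fun x => g1 x + g2 x).
Proof. intros H1 H2. pose proof (UCg_lin 1 g1 g2 H1 H2). intros e He.
  destruct (H e He) as [d [Hd H']]. exists d. split; auto. intros. specialize (H' th th' H0).
  rewrite !Rmult_1_l in H'. auto. Qed.

Lemma UCg_scal a g : UCg g -> UCg (fun x => a * g x).
Proof. intros H. pose proof (UCg_lin a g (fun _ => 0) H (UCg_const 0)). intros e He.
  destruct (H0 e He) as [d [Hd H']]. exists d. split; auto. intros. specialize (H' th th' H1).
  rewrite !Rplus_0_r in H'. auto. Qed.

Lemma UCg_ext g1 g2 : (forall x, g1 x = g2 x) -> UCg g1 -> UCg g2.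
Proof. intros E H e He. destruct (H e He) as [d [Hd H']]. exists d. split; auto.
  intros. rewrite <- !E. auto. Qed.

Lemma UCg_mult g1 g2 : UCg g1 -> UCg g2 -> bnd g1 -> bnd g2 -> UCg (fun x => g1 x * g2 x).
Proof.
  intros H1 H2 [B1 HB1] [B2 HB2] e He.
  assert (0 <= B1) by (specialize (HB1 (fun _ => 0)); pose proof (Rabs_pos (g1 (fun _ => 0))); lra).
  assert (0 <= B2) by (specialize (HB2 (fun _ => 0)); pose proof (Rabs_pos (g2 (fun _ => 0))); lra).
  destruct (H1 (e / 2 / (B2 + 1))) as [d1 [Hd1 H1']].
  { apply Rdiv_lt_0_compat; lra. }
  destruct (H2 (e / 2 / (B1 + 1))) as [d2 [Hd2 H2']].
  { apply Rdiv_lt_0_compat; lra. }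
  exists (Rmin d1 d2). split. apply Rmin_pos; auto.
  intros th th' Hc.
  assert (C1 : clos d1 th th') by (intros i; specialize (Hc i); pose proof (Rmin_l d1 d2); lra).
  assert (C2 : clos d2 th th') by (intros i; specialize (Hc i); pose proof (Rmin_r d1 d2); lra).
  specialize (H1' _ _ C1). specialize (H2' _ _ C2).
  replace (g1 th * g2 th - g1 th' * g2 th') with ((g1 th - g1 th') * g2 th + g1 th' * (g2 th - g2 th')) by ring.
  eapply Rle_trans. apply Rabs_triang. rewrite !Rabs_mult.
  assert (Rabs (g1 th - g1 th') * Rabs (g2 th) <= e / 2).
  { apply Rle_trans with ((e / 2 / (B2 + 1)) * (B2 + 1)).
    apply Rmult_le_compat; try apply Rabs_pos; auto. specialize (HB2 th); lra.
    right. field. lra. }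
  assert (Rabs (g1 th') * Rabs (g2 th - g2 th') <= e / 2).
  { apply Rle_trans with ((B1 + 1) * (e / 2 / (B1 + 1))).
    apply Rmult_le_compat; try apply Rabs_pos; auto. specialize (HB1 th'); lra.
    right. field. lra. }
  lra.
Qed.

Lemma UCg_abs g : UCg g -> UCg (fun x => Rabs (g x)).
Proof. intros H e He. destruct (H e He) as [d [Hd H']]. exists d. split; auto.
  intros. eapply Rle_trans. apply Rabs_triang_inv2. auto. Qed.

Lemma bnd_plus g1 g2 : bnd g1 -> bnd g2 -> bnd (fun x => g1 x + g2 x).
Proof. intros [B1 H1] [B2 H2]. exists (B1 + B2). intros th.
  eapply Rle_trans. apply Rabs_triang. specialize (H1 th); specialize (H2 th); lra. Qed.
Lemma bnd_mult g1 g2 : bnd g1 -> bnd g2 -> bnd (fun x => g1 x * g2 x).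
Proof. intros [B1 H1] [B2 H2]. exists (B1 * B2). intros th. rewrite Rabs_mult.
  apply Rmult_le_compat; try apply Rabs_pos; auto. Qed.
Lemma bnd_const c : bnd (fun _ => c).
Proof. exists (Rabs c). intros; lra. Qed.
Lemma bnd_scal a g : bnd g -> bnd (fun x => a * g x).
Proof. intros. apply (bnd_mult (fun _ => a) g); auto. apply bnd_const. Qed.
Lemma bnd_ext g1 g2 : (forall x, g1 x = g2 x) -> bnd g1 -> bnd g2.
Proof. intros E [B H]. exists B. intros; rewrite <- E; auto. Qed.
Lemma bnd_abs g : bnd g -> bnd (fun x => Rabs (g x)).
Proof. intros [B H]. exists B. intros; rewrite Rabs_Rabsolu; auto. Qed.

Lemma UCg_sum {A} (G : A -> (nat -> R) -> R) L :
  (forall x, In x L -> UCg (G x)) -> UCg (fun th => sumR (map (fun x => G x th) L)).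
Proof.
  induction L; simpl; intros H. apply UCg_const.
  apply UCg_plus; auto.
Qed.
Lemma bnd_sum {A} (G : A -> (nat -> R) -> R) L :
  (forall x, In x L -> bnd (G x)) -> bnd (fun th => sumR (map (fun x => G x th) L)).
Proof.
  induction L; simpl; intros H. apply bnd_const.
  apply bnd_plus; auto.
Qed.

Lemma IntTorus_plus m g1 g2 th : UCg g1 -> UCg g2 ->
  IntTorus m (fun x => g1 x + g2 x) th = IntTorus m g1 th + IntTorus m g2 th.
Proof. intros. rewrite <- (Rmult_1_l (IntTorus m g1 th)), <- IntTorus_lin; auto.
  apply IntTorus_ext. intros; ring. Qed.
Lemma IntTorus_scal m a g th : UCg g -> IntTorus m (fun x => a * g x) th = a * IntTorus m g th.
Proof. intros. transitivity (a * IntTorus m g th + IntTorus m (fun _ => 0) th).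
  rewrite <- IntTorus_lin; auto. 2: apply UCg_const.
  apply IntTorus_ext. intros; ring. rewrite IntTorus_const; ring. Qed.
Lemma IntTorus_sum {A} m (G : A -> (nat -> R) -> R) L th :
  (forall x, In x L -> UCg (G x)) ->
  IntTorus m (fun φ => sumR (map (fun x => G x φ) L)) th = sumR (map (fun x => IntTorus m (G x) th) L).
Proof.
  induction L; simpl; intros H. apply IntTorus_const.
  rewrite IntTorus_plus; auto. rewrite IHL; auto. apply UCg_sum; auto.
Qed.

Lemma UCg_lip g K : 0 <= K -> (forall th th' del, 0 < del -> clos del th th' -> Rabs (g th - g th') <= K * del) -> UCg g.
Proof.
  intros HK H e He. exists (e / (K + 1)). split. apply Rdiv_lt_0_compat; lra.
  intros th th' Hc. apply Rle_trans with (K * (e / (K + 1))).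
  apply H; auto. apply Rdiv_lt_0_compat; lra.
  apply Rle_trans with ((K+1) * (e / (K + 1))).
  apply Rmult_le_compat_r. left; apply Rdiv_lt_0_compat; lra. lra. right; field; lra.
Qed.

Lemma cos_lip x y : Rabs (cos x - cos y) <= Rabs (x - y).
Proof.
  destruct (MVT_abs cos (fun t => - sin t) y x) as [c [Hc _]].
  intros; apply derivable_pt_lim_cos.
  rewrite Hc. rewrite Rabs_Ropp. pose proof (SIN_bound c).
  rewrite <- (Rmult_1_l (Rabs (x - y))) at 2. apply Rmult_le_compat_r. apply Rabs_pos.
  apply Rabs_le; lra.
Qed.

Definition zabs (al : list Z) : Z := fold_right Z.add 0%Z (map Z.abs al).

Lemma dotZ_lip al th th' i del : 0 < del -> clos del th th' ->
  Rabs (dotZ al th i - dotZ al th' i) <= IZR (zabs al) * del.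
Proof.
  revert i; induction al; intros i Hd Hc; simpl. rewrite Rminus_diag, Rabs_R0. unfold zabs; simpl; lra.
  unfold zabs; simpl. fold (zabs al). rewrite plus_IZR.
  replace (IZR a * th i + dotZ al th (S i) - (IZR a * th' i + dotZ al th' (S i)))
    with (IZR a * (th i - th' i) + (dotZ al th (S i) - dotZ al th' (S i))) by ring.
  eapply Rle_trans. apply Rabs_triang. rewrite Rabs_mult.
  specialize (IHal (S i) Hd Hc). rewrite <- abs_IZR.
  assert (Rabs (th i - th' i) <= del) by (left; apply Hc).
  assert (IZR (Z.abs a) * Rabs (th i - th' i) <= IZR (Z.abs a) * del).
  { apply Rmult_le_compat_l; auto. apply IZR_le; lia. }
  lra.
Qed.

Lemma zabs_nonneg al : (0 <= zabs al)%Z.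
Proof. induction al; unfold zabs in *; simpl; lia. Qed.

Lemma UCg_cos_lin (h : (nat -> R) -> R) K : 0 <= K ->
  (forall th th' del, 0 < del -> clos del th th' -> Rabs (h th - h th') <= K * del) ->
  UCg (fun x => cos (h x)).
Proof.
  intros HK H. apply (UCg_lip _ K); auto. intros. eapply Rle_trans. apply cos_lip. auto.
Qed.

Lemma bnd_cos h : bnd (fun x => cos (h x)).
Proof. exists 1. intros. pose proof (COS_bound (h th)). apply Rabs_le; lra. Qed.

Lemma dotZ_upd_lt g th j t i : (j < i)%nat -> dotZ g (upd th j t) i = dotZ g th i.
Proof.
  revert i; induction g; intros i H; simpl; auto.
  rewrite IHg by lia. unfold upd. destruct (Nat.eqb_spec i j); [lia|]. auto.
Qed.

Lemma dotZ_upd g th j t i : (i <= j)%nat ->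
  dotZ g (upd th j t) i = dotZ g th i + IZR (nth (j - i) g 0%Z) * (t - th j).
Proof.
  revert i; induction g; intros i H; simpl.
  - destruct (j - i)%nat; simpl; ring.
  - unfold upd at 1. destruct (Nat.eqb_spec i j).
    + subst. rewrite dotZ_upd_lt by lia. rewrite Nat.sub_diag. simpl. ring.
    + rewrite IHg by lia. replace (j - i)%nat with (S (j - S i)) by lia. simpl. ring.
Qed.

Lemma cont_cos_lin a r x : continuous (fun t => cos (a * t + r)) x.
Proof. apply continuity_pt_filterlim. apply derivable_continuous_pt. reg. Qed.

Lemma sin_period_Z a r : sin (IZR a * (2 * PI) + r) = sin r.
Proof.
  destruct (Z_le_gt_dec 0 a) as [H|H].
  - replace a with (Z.of_nat (Z.to_nat a)) by lia. rewrite <- INR_IZR_INZ.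
    rewrite <- (sin_period r (Z.to_nat a)). f_equal. ring.
  - replace a with (- Z.of_nat (Z.to_nat (- a)))%Z by lia. rewrite opp_IZR, <- INR_IZR_INZ.
    set (k := Z.to_nat (-a)).
    rewrite <- (sin_period (- INR k * (2 * PI) + r) k). f_equal. ring.
Qed.

Lemma int_cos a r :
  RInt (fun t => cos (IZR a * t + r)) 0 (2 * PI) = if Z.eqb a 0 then 2 * PI * cos r else 0.
Proof.
  destruct (Z.eqb_spec a 0) as [->|Ha].
  - rewrite (RInt_ext _ (fun _ => cos r)). rewrite RInt_const. unfold scal; simpl; unfold mult; simpl. ring.
    intros; f_equal; ring.
  - assert (Ha' : IZR a <> 0) by (apply not_0_IZR; auto).
    apply is_RInt_unique.
    set (f := fun t => sin (IZR a * t + r) / IZR a).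
    assert (Hf : is_RInt (fun t => cos (IZR a * t + r)) 0 (2 * PI) (minus (f (2 * PI)) (f 0))).
    { apply (is_RInt_derive (V := R_CompleteNormedModule)).
      + intros x _. unfold f. auto_derive; auto. field; auto.
      + intros x _. exact (cont_cos_lin (IZR a) r x). }
    assert (E : minus (f (2 * PI)) (f 0) = 0).
    { unfold minus, plus, opp, f; simpl.
      rewrite sin_period_Z, Rmult_0_r, Rplus_0_l. field; auto. }
    rewrite E in Hf. exact Hf.
Qed.

Definition zb (m : nat) (g : list Z) : bool := forallb (fun i => Z.eqb (nth i g 0%Z) 0) (seq 0 m).

Lemma zb_S m g : zb (S m) g = (zb m g && Z.eqb (nth m g 0%Z) 0)%bool.
Proof. unfold zb. rewrite seq_S, forallb_app. simpl. rewrite Bool.andb_true_r. reflexivity. Qed.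

Lemma ortho m : forall g c th0,
  IntTorus m (fun φ => cos (dotZ g φ 0 + c)) th0 = if zb m g then cos (dotZ g th0 0 + c) else 0.
Proof.
  induction m; intros g c th0; [reflexivity|].
  rewrite IntTorus_S.
  replace (fun t => IntTorus m (fun φ => cos (dotZ g φ 0 + c)) (upd th0 m t))
    with (fun t => if zb m g then cos (IZR (nth m g 0%Z) * t + (dotZ g th0 0 + c - IZR (nth m g 0%Z) * th0 m)) else 0).
  2:{ apply functional_extensionality; intros t. rewrite IHm. destruct (zb m g); auto.
      rewrite dotZ_upd by lia. rewrite Nat.sub_0_r. f_equal. ring. }
  rewrite zb_S. destruct (zb m g); simpl.
  - rewrite Rint_eq. rewrite int_cos. destruct (Z.eqb_spec (nth m g 0%Z) 0) as [E|E].
    + rewrite E. pose proof twoPI_pos. field_simplify; try lra. f_equal. ring.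
    + ring.
    + apply (ex_RInt_continuous (V := R_CompleteNormedModule)). intros. apply cont_cos_lin.
  - rewrite Rint_eq. rewrite RInt_const. unfold scal; simpl; unfold mult; simpl. ring.
    apply ex_RInt_const.
Qed.

Lemma dotZ_subang al th ph i : dotZ al (subang th ph) i = dotZ al th i - dotZ al ph i.
Proof. revert i; induction al; intros i; simpl. ring. rewrite IHal. unfold subang. ring. Qed.
Lemma dotZ_opp al ph i : dotZ (map Z.opp al) ph i = - dotZ al ph i.
Proof. revert i; induction al; intros i; simpl. ring. rewrite IHal, opp_IZR. ring. Qed.
Lemma dotZ_zero al i : dotZ al (fun _ => 0) i = 0.
Proof. revert i; induction al; intros i; simpl. ring. rewrite IHal. ring. Qed.
Lemma dotZ_vadd a b th i : length a = length b -> dotZ (vadd a b) th i = dotZ a th i + dotZ b th i.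
Proof. revert b i; induction a; destruct b; simpl; intros i H; try discriminate; [lra|].
  rewrite IHa by lia. rewrite plus_IZR. ring. Qed.

Lemma zb_opp m al : zb m (map Z.opp al) = zb m al.
Proof.
  unfold zb. f_equal. apply functional_extensionality. intros i.
  change 0%Z with (Z.opp 0) at 1. rewrite map_nth. destruct (nth i al 0%Z); reflexivity.
Qed.

Lemma zb_iff al : zb (length al) al = true <-> List.Forall (fun z => z = 0%Z) al.
Proof.
  unfold zb. rewrite forallb_forall. split.
  - intros H. apply List.Forall_forall. intros x Hx. apply In_nth with (d := 0%Z) in Hx.
    destruct Hx as [i [Hi <-]]. apply Z.eqb_eq, H, in_seq. lia.
  - intros H i Hi. apply in_seq in Hi. apply Z.eqb_eq. rewrite List.Forall_forall in H.
    apply H. apply nth_In. lia.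
Qed.

Lemma UCg_cosdiff g th c : UCg (fun ph => cos (dotZ g (subang th ph) 0 + c)).
Proof.
  apply (UCg_cos_lin _ (IZR (zabs g))). apply IZR_le, zabs_nonneg.
  intros x y del Hd Hc. rewrite !dotZ_subang.
  replace (dotZ g th 0 - dotZ g x 0 + c - (dotZ g th 0 - dotZ g y 0 + c)) with (- (dotZ g x 0 - dotZ g y 0)) by ring.
  rewrite Rabs_Ropp. apply dotZ_lip; auto.
Qed.

Lemma int_cosdiff N g th c : length g = N ->
  haar_int N (fun ph => cos (dotZ g (subang th ph) 0 + c)) = if zb N g then cos (dotZ g th 0 + c) else 0.
Proof.
  intros Hl. unfold haar_int.
  rewrite (IntTorus_ext _ _ (fun ph => cos (dotZ (map Z.opp g) ph 0 + (dotZ g th 0 + c)))).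
  rewrite ortho, zb_opp, dotZ_zero, Rplus_0_l. reflexivity.
  intros x. rewrite dotZ_subang, dotZ_opp. f_equal; ring.
Qed.

Lemma zero_iff_ZNk N k u : length u = N -> In u (ZNk N k) ->
  (List.Forall (fun z => z = 0%Z) u <-> k = 0%nat).
Proof.
  intros Hl Hu. apply In_ZNk_iff in Hu; auto. destruct Hu as [H1 H2]. split.
  - intros HF. assert (vpos u = map (fun _ => 0%Z) u).
    { unfold vpos. apply map_ext_in. intros z Hz. rewrite List.Forall_forall in HF. rewrite (HF z Hz). reflexivity. }
    rewrite H in H2. assert (zsum (map (fun _ : Z => 0%Z) u) = 0%Z).
    { clear. induction u; unfold zsum in *; simpl; auto. }
    lia.
  - intros ->. pose proof (zsum_pos_neg u). simpl in H2.
    assert (Hn : zsum (vneg u) = 0%Z) by lia.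
    clear -H2 Hn. induction u; constructor; unfold zsum in *; simpl in *;
      pose proof (zsum_nonneg _ (vpos_nonneg u)); pose proof (zsum_nonneg _ (vneg_nonneg u));
      unfold zsum in *; try lia.
    apply IHu; lia.
Qed.

Definition Pker N n th ph := sigma_re N n (INR (N - 1)) (subang th ph).

Lemma UCg_Pker N n th : UCg (Pker N n th).
Proof.
  unfold Pker, sigma_re, S_re. apply UCg_sum. intros k _. apply UCg_scal.
  apply UCg_sum. intros al _. apply (UCg_ext (fun ph => cos (dotZ al (subang th ph) 0 + 0))).
  intros; rewrite Rplus_0_r; auto. apply UCg_cosdiff.
Qed.

Lemma bnd_Pker N n th : bnd (Pker N n th).
Proof.
  unfold Pker, sigma_re, S_re. apply bnd_sum. intros k _. apply bnd_scal.
  apply bnd_sum. intros al _. apply bnd_cos.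
Qed.

Lemma dotZ_zeros g th i : List.Forall (fun z => z = 0%Z) g -> dotZ g th i = 0.
Proof. intros H; revert i; induction H; intros i; simpl; auto. subst. rewrite IHForall. ring. Qed.

Lemma zeros_vadd a w : length a = length w ->
  (List.Forall (fun z => z = 0%Z) (vadd a w) <-> a = map Z.opp w).
Proof.
  revert w; induction a; destruct w; simpl; intros H; try discriminate.
  - split; auto.
  - split.
    + intros HF. inversion HF; subst. f_equal. lia. apply IHa; auto.
    + intros E. inversion E; subst. constructor. lia. apply IHa; auto.
Qed.

Lemma zeros_vsub a w : length a = length w ->
  (List.Forall (fun z => z = 0%Z) (vsub a w) <-> a = w).
Proof.
  revert w; induction a; destruct w; simpl; intros H; try discriminate.
  - split; auto.
  - split.
    + intros HF. inversion HF; subst. f_equal. lia. apply IHa; auto.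
    + intros E. inversion E; subst. constructor. lia. apply IHa; auto.
Qed.

Lemma ind_vadd N a w th : length a = N -> length w = N ->
  (if zb N (vadd a w) then cos (dotZ (vadd a w) th 0 + 0) else 0) = if ldec a (map Z.opp w) then 1 else 0.
Proof.
  intros Ha Hw. assert (Hl : length (vadd a w) = N) by (rewrite vadd_len; lia).
  destruct (zb N (vadd a w)) eqn:E; rewrite <- Hl in E.
  - apply zb_iff in E. rewrite dotZ_zeros by auto. rewrite Rplus_0_r, cos_0.
    destruct (ldec a (map Z.opp w)) as [|NE]; auto. exfalso. apply NE. apply zeros_vadd; auto. lia.
  - destruct (ldec a (map Z.opp w)); auto. exfalso.
    assert (zb (length (vadd a w)) (vadd a w) = true) by (apply zb_iff, zeros_vadd; auto; lia). congruence.
Qed.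

Lemma ind_vsub N a w th : length a = N -> length w = N ->
  (if zb N (vsub a w) then cos (dotZ (vsub a w) th 0 + 0) else 0) = if ldec a w then 1 else 0.
Proof.
  intros Ha Hw. assert (Hl : length (vsub a w) = N) by (rewrite vsub_len; lia).
  destruct (zb N (vsub a w)) eqn:E; rewrite <- Hl in E.
  - apply zb_iff in E. rewrite dotZ_zeros by auto. rewrite Rplus_0_r, cos_0.
    destruct (ldec a w) as [|NE]; auto. exfalso. apply NE. apply zeros_vsub; auto. lia.
  - destruct (ldec a w); auto. exfalso.
    assert (zb (length (vsub a w)) (vsub a w) = true) by (apply zb_iff, zeros_vsub; auto; lia). congruence.
Qed.

Lemma sum_ind_list L v : NoDup L ->
  sumR (map (fun a => if ldec a v then 1 else 0) L) = if in_dec ldec v L then 1 else 0.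
Proof.
  intros HN. destruct (in_dec ldec v L).
  - apply (sumR_indicator ldec (fun _ => 1)); auto.
  - rewrite (sumR_map_ext _ (fun _ => 0)). apply sumR_map_0.
    intros a Ha. destruct (ldec a v); subst; auto. contradiction.
Qed.

Lemma zsum_opp w : zsum (map Z.opp w) = (- zsum w)%Z.
Proof. induction w; unfold zsum in *; simpl; lia. Qed.
Lemma vpos_opp w : vpos (map Z.opp w) = vneg w.
Proof. unfold vpos, vneg. rewrite map_map. reflexivity. Qed.

Lemma int_Pker_cos N n th w k0 : (1 <= N)%nat -> length w = N ->
  zsum w = 0%Z -> zsum (vpos w) = Z.of_nat k0 -> (k0 <= n)%nat ->
  haar_int N (fun ph => Pker N n th ph * cos (dotZ w (subang th ph) 0)) = coefs n (INR (N - 1)) k0.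
Proof.
  intros HN Hw Hz Hk Hkn. unfold Pker, sigma_re, S_re, haar_int.
  rewrite (IntTorus_ext _ _ (fun ph => sumR (map (fun k => coefs n (INR (N - 1)) k *
      sumR (map (fun al => / 2 * cos (dotZ (vadd al w) (subang th ph) 0 + 0) + / 2 * cos (dotZ (vsub al w) (subang th ph) 0 + 0)) (ZNk N k))) (seq 0 (S n))))).
  2:{ intros ph. rewrite Rmult_comm, <- sumR_map_scal. apply sumR_map_ext. intros k _.
      set (A := cos (dotZ w (subang th ph) 0)).
      rewrite Rmult_comm, Rmult_assoc. f_equal.
      rewrite Rmult_comm, <- sumR_map_scal. apply sumR_map_ext. intros al Hal.
      apply In_ZNk, proj1, In_boxes, proj1 in Hal. unfold A.
      rewrite dotZ_vadd, dotZ_vsub by lia. rewrite !Rplus_0_r. rewrite cos_plus, cos_minus. field. }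
  rewrite IntTorus_sum.
  2:{ intros k _. apply UCg_scal. apply UCg_sum. intros al _. apply UCg_plus; apply UCg_scal; apply UCg_cosdiff. }
  rewrite (sumR_map_ext _ (fun k => if Nat.eq_dec k k0 then coefs n (INR (N - 1)) k else 0)).
  { rewrite sum_seq_single. destruct (le_dec k0 n); [reflexivity|lia]. }
  intros k _. rewrite IntTorus_scal.
  2:{ apply UCg_sum. intros al _. apply UCg_plus; apply UCg_scal; apply UCg_cosdiff. }
  rewrite IntTorus_sum.
  2:{ intros al _. apply UCg_plus; apply UCg_scal; apply UCg_cosdiff. }
  rewrite (sumR_map_ext _ (fun al => / 2 * (if ldec al (map Z.opp w) then 1 else 0) + / 2 * (if ldec al w then 1 else 0))).
  2:{ intros al Hal. apply In_ZNk, proj1, In_boxes, proj1 in Hal.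
      rewrite IntTorus_plus by (apply UCg_scal; apply UCg_cosdiff).
      rewrite !IntTorus_scal by apply UCg_cosdiff. fold (haar_int N (fun ph => cos (dotZ (vadd al w) (subang th ph) 0 + 0))).
      fold (haar_int N (fun ph => cos (dotZ (vsub al w) (subang th ph) 0 + 0))).
      rewrite !int_cosdiff by (try rewrite vadd_len; try rewrite vsub_len; lia).
      rewrite ind_vadd, ind_vsub by lia. reflexivity. }
  rewrite sumR_map_plus, !sumR_map_scal, !sum_ind_list by apply NoDup_ZNk.
  destruct (in_dec ldec (map Z.opp w) (ZNk N k)) as [H1|H1]; rewrite In_ZNk_iff in H1 by (rewrite length_map; auto);
  destruct (in_dec ldec w (ZNk N k)) as [H2|H2]; rewrite In_ZNk_iff in H2 by auto;
  rewrite zsum_opp, vpos_opp in H1; pose proof (zsum_pos_neg w);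
  destruct (Nat.eq_dec k k0); try lra; exfalso; try (apply H1; split; lia); try (apply H2; split; lia); lia.
Qed.

Lemma dotZ_seq (f : nat -> Z) y len : forall s,
  dotZ (map f (seq s len)) y s = sumR (map (fun i => IZR (f i) * y i) (seq s len)).
Proof. induction len; intros s; simpl; auto. rewrite IHlen. reflexivity. Qed.

Definition wjl (N j l : nat) := map (fun i => (Z.b2z (Nat.eqb i j) - Z.b2z (Nat.eqb i l))%Z) (seq 0 N).

Lemma dotZ_wjl N j l y : (j < N)%nat -> (l < N)%nat -> dotZ (wjl N j l) y 0 = y j - y l.
Proof.
  intros Hj Hl. unfold wjl. rewrite dotZ_seq.
  rewrite (sumR_map_ext _ (fun i => (if Nat.eq_dec i j then y i else 0) + - (if Nat.eq_dec i l then y i else 0))).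
  rewrite sumR_map_plus, sumR_map_opp.
  rewrite (sumR_indicator Nat.eq_dec y), (sumR_indicator Nat.eq_dec y); try apply seq_NoDup; try (apply in_seq; lia).
  ring.
  intros i _. rewrite minus_IZR.
  destruct (Nat.eqb_spec i j), (Nat.eqb_spec i l), (Nat.eq_dec i j), (Nat.eq_dec i l); simpl; try lia; ring.
Qed.

Lemma zsum_map_sub {A} (f g : A -> Z) L : zsum (map (fun x => (f x - g x)%Z) L) = (zsum (map f L) - zsum (map g L))%Z.
Proof. induction L; unfold zsum in *; simpl; lia. Qed.

Lemma zsum_le {A} (f g : A -> Z) L : (forall x, In x L -> (f x <= g x)%Z) -> (zsum (map f L) <= zsum (map g L))%Z.
Proof. induction L; unfold zsum in *; simpl; intros H; [lia|]. specialize (IHL ltac:(auto)). specialize (H a ltac:(auto)). lia. Qed.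

Lemma zsum_ind j len : forall s, zsum (map (fun i => Z.b2z (Nat.eqb i j)) (seq s len)) =
  if (Nat.leb s j && Nat.ltb j (s + len))%bool then 1%Z else 0%Z.
Proof.
  induction len; intros s; simpl.
  - destruct (Nat.leb_spec s j), (Nat.ltb_spec j (s + 0)); simpl; auto; lia.
  - unfold zsum in *; simpl. rewrite IHlen.
    destruct (Nat.eqb_spec s j), (Nat.leb_spec s j), (Nat.ltb_spec j (s + S len)),
      (Nat.leb_spec (S s) j), (Nat.ltb_spec j (S s + len)); simpl; lia.
Qed.

Lemma wjl_props N j l : (j < N)%nat -> (l < N)%nat ->
  length (wjl N j l) = N /\ zsum (wjl N j l) = 0%Z /\
  (0 <= zsum (vpos (wjl N j l)) <= 1)%Z.
Proof.
  intros Hj Hl. unfold wjl. rewrite length_map, length_seq. split; auto. split.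
  - rewrite zsum_map_sub, !zsum_ind. destruct (Nat.leb_spec 0 j), (Nat.ltb_spec j (0 + N)), (Nat.leb_spec 0 l), (Nat.ltb_spec l (0+N)); simpl; lia.
  - split. apply zsum_nonneg, vpos_nonneg.
    unfold vpos. rewrite map_map.
    eapply Z.le_trans. apply (zsum_le _ (fun i => Z.b2z (Nat.eqb i j))).
    intros x _. destruct (Nat.eqb x j), (Nat.eqb x l); simpl; lia.
    rewrite zsum_ind. destruct (_ && _)%bool; lia.
Qed.

Lemma Pker_int1 N n th : (1 <= N)%nat -> haar_int N (Pker N n th) = 1.
Proof.
  intros HN.
  pose proof (int_Pker_cos N n th (repeat 0%Z N) 0 HN (repeat_length _ _)) as H.
  unfold haar_int in *. rewrite (IntTorus_ext _ _ (Pker N n th)) in H.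
  - rewrite H. unfold coefs. simpl. field.
    + clear. induction N; unfold zsum in *; simpl; auto.
    + clear. induction N; unfold zsum, vpos in *; simpl; auto.
    + lia.
  - intros ph. rewrite dotZ_zeros, cos_0, Rmult_1_r. reflexivity.
    apply List.Forall_forall. intros x Hx. apply repeat_spec in Hx. auto.
Qed.

Definition Dfun N (th ph : nat -> R) := sumR (map (fun j => sumR (map (fun l =>
   1 - cos ((th j - ph j) - (th l - ph l))) (seq 0 N))) (seq 0 N)).

Lemma UCg_cosdiff0 g th : UCg (fun ph => cos (dotZ g (subang th ph) 0)).
Proof. apply (UCg_ext (fun ph => cos (dotZ g (subang th ph) 0 + 0))). intros; rewrite Rplus_0_r; auto.
  apply UCg_cosdiff. Qed.

Lemma sumR_const {A} (c : R) (l : list A) : sumR (map (fun _ => c) l) = INR (length l) * c.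
Proof. induction l; simpl. ring. rewrite IHl. destruct (length l); simpl; ring. Qed.

Lemma coefs_1 n d : 0 < INR n + d -> coefs n d 1 = INR n / (INR n + d).
Proof. intros H. unfold coefs. simpl. field. lra. Qed.

Lemma PD_int N n th : (2 <= N)%nat -> (1 <= n)%nat ->
  haar_int N (fun ph => Pker N n th ph * Dfun N th ph) <=
  INR N * INR N * (INR (N - 1) / (INR n + INR (N - 1))).
Proof.
  intros HN Hn. unfold haar_int.
  assert (Hpos : 0 < INR n + INR (N - 1)).
  { assert (0 < INR n) by (apply lt_0_INR; lia). pose proof (pos_INR (N - 1)). lra. }
  set (W j l := wjl N j l).
  rewrite (IntTorus_ext _ _ (fun ph => sumR (map (fun j => sumR (map (fun l =>
       1 * Pker N n th ph + (- 1) * (Pker N n th ph * cos (dotZ (W j l) (subang th ph) 0))) (seq 0 N))) (seq 0 N)))).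
  2:{ intros ph. unfold Dfun. rewrite <- (sumR_map_scal (Pker N n th ph)). apply sumR_map_ext. intros j Hj.
      rewrite <- (sumR_map_scal (Pker N n th ph)). apply sumR_map_ext. intros l Hl. apply in_seq in Hj, Hl.
      unfold W. rewrite dotZ_wjl by lia. unfold subang. ring. }
  rewrite IntTorus_sum.
  2:{ intros j _. apply UCg_sum. intros l _. apply UCg_lin. apply UCg_Pker. apply UCg_scal.
      apply UCg_mult. apply UCg_Pker. apply UCg_cosdiff0. apply bnd_Pker. apply bnd_cos. }
  replace (INR N * INR N * (INR (N - 1) / (INR n + INR (N - 1)))) with
    (INR (length (seq 0 N)) * (INR (length (seq 0 N)) * (INR (N - 1) / (INR n + INR (N - 1))))) by (rewrite length_seq; ring).
  rewrite <- sumR_const. apply sumR_le. intros j Hj.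
  rewrite IntTorus_sum.
  2:{ intros l _. apply UCg_lin. apply UCg_Pker. apply UCg_scal.
      apply UCg_mult. apply UCg_Pker. apply UCg_cosdiff0. apply bnd_Pker. apply bnd_cos. }
  rewrite <- sumR_const. apply sumR_le. intros l Hl. apply in_seq in Hj, Hl.
  rewrite IntTorus_lin, IntTorus_scal.
  2:{ apply UCg_mult. apply UCg_Pker. apply UCg_cosdiff0. apply bnd_Pker. apply bnd_cos. }
  2: apply UCg_Pker.
  2:{ apply UCg_scal. apply UCg_mult. apply UCg_Pker. apply UCg_cosdiff0. apply bnd_Pker. apply bnd_cos. }
  fold (haar_int N (Pker N n th)). rewrite Pker_int1 by lia.
  destruct (wjl_props N j l) as [L1 [L2 L3]]; try lia.
  fold (haar_int N (fun ph => Pker N n th ph * cos (dotZ (W j l) (subang th ph) 0))).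
  rewrite (int_Pker_cos N n th (W j l) (Z.to_nat (zsum (vpos (wjl N j l))))); unfold W in *; try lia; auto.
  destruct (Z.eq_dec (zsum (vpos (wjl N j l))) 0) as [E|E].
  - rewrite E. simpl. unfold coefs. simpl. assert (0 <= INR (N - 1) / (INR n + INR (N - 1))).
    { apply Rdiv_le_0_compat. apply pos_INR. auto. }
    replace (1 / 1) with 1 by field. lra.
  - replace (Z.to_nat (zsum (vpos (wjl N j l)))) with 1%nat by lia.
    rewrite coefs_1 by auto. right. field. lra.
Qed.

Lemma sumR_nonneg_f (f : nat -> R) l : (forall i, 0 <= f i) -> 0 <= sumR (map f l).
Proof. intros H; induction l; simpl. lra. pose proof (H a); lra. Qed.
Lemma sumR_ge_elem (f : nat -> R) l i : (forall i, 0 <= f i) -> In i l -> f i <= sumR (map f l).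
Proof. intros H; induction l; simpl; intros Hi. contradiction.
  pose proof (sumR_nonneg_f f l H). pose proof (H a).
  destruct Hi as [->|Hi]. lra. pose proof (IHl Hi). lra. Qed.

Section Cousin.
Variable N : nat.
Variable Bad : (nat -> R) -> (nat -> R) -> Prop.
Hypothesis Hsplit : forall lo wd j, (j < N)%nat -> Bad lo wd ->
  Bad lo (upd wd j (wd j / 2)) \/ Bad (upd lo j (lo j + wd j / 2)) (upd wd j (wd j / 2)).
Hypothesis Hloc : forall p, exists del, 0 < del /\ forall lo wd,
  (forall i, (i < N)%nat -> 0 <= wd i < del /\ lo i <= p i <= lo i + wd i) -> ~ Bad lo wd.

Definition step (b : (nat -> R) * (nat -> R)) (j : nat) : (nat -> R) * (nat -> R) :=
  if excluded_middle_informative (Bad (fst b) (upd (snd b) j (snd b j / 2)))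
  then (fst b, upd (snd b) j (snd b j / 2))
  else (upd (fst b) j (fst b j + snd b j / 2), upd (snd b) j (snd b j / 2)).

Lemma step_bad b j : (j < N)%nat -> Bad (fst b) (snd b) -> Bad (fst (step b j)) (snd (step b j)).
Proof.
  intros Hj H. unfold step. destruct (excluded_middle_informative _); simpl; auto.
  destruct (Hsplit _ _ _ Hj H); tauto.
Qed.

Lemma step_snd b j i : snd (step b j) i = if Nat.eqb i j then snd b j / 2 else snd b i.
Proof. unfold step. destruct (excluded_middle_informative _); simpl; reflexivity. Qed.

Definition nested (b b' : (nat -> R) * (nat -> R)) :=
  forall i, fst b i <= fst b' i /\ fst b' i + snd b' i <= fst b i + snd b i.

Definition wpos (b : (nat -> R) * (nat -> R)) := forall i, 0 <= snd b i.

Lemma step_nested b j : wpos b -> nested b (step b j) /\ wpos (step b j).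
Proof.
  intros Hw. split.
  - intros i. specialize (Hw i). unfold step, upd. destruct (excluded_middle_informative _); simpl;
    destruct (Nat.eqb_spec i j); subst; lra.
  - intros i. rewrite step_snd. pose proof (Hw i). pose proof (Hw j). destruct (Nat.eqb i j); lra.
Qed.

Lemma nested_refl b : nested b b.
Proof. intros i; lra. Qed.
Lemma nested_trans b1 b2 b3 : nested b1 b2 -> nested b2 b3 -> nested b1 b3.
Proof. intros H1 H2 i. specialize (H1 i). specialize (H2 i). lra. Qed.

Lemma fold_props L : forall b, wpos b ->
  nested b (fold_left step L b) /\ wpos (fold_left step L b) /\
  ((forall j, In j L -> (j < N)%nat) -> Bad (fst b) (snd b) -> Bad (fst (fold_left step L b)) (snd (fold_left step L b))) /\
  (NoDup L -> forall i, snd (fold_left step L b) i = if in_dec Nat.eq_dec i L then snd b i / 2 else snd b i).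
Proof.
  induction L as [|j L IH]; intros b Hw; simpl.
  - split. apply nested_refl. split; auto.
  - destruct (step_nested b j Hw) as [N1 W1].
    destruct (IH (step b j) W1) as [N2 [W2 [B2 S2]]]. split. eapply nested_trans; eauto.
    split; auto. split.
    + intros HL HB. apply B2. intros; apply HL; auto. apply step_bad; auto.
    + intros HN i. inversion HN; subst. rewrite S2 by auto. rewrite step_snd.
      destruct (Nat.eqb_spec i j); subst.
      * destruct (in_dec Nat.eq_dec j L); [contradiction|].
        destruct (Nat.eq_dec j j); [|congruence]. reflexivity.
      * destruct (in_dec Nat.eq_dec i L); destruct (Nat.eq_dec j i); try congruence; reflexivity.
Qed.

Definition big b := fold_left step (seq 0 N) b.

Lemma cousin lo wd : (forall i, 0 <= wd i) -> ~ Bad lo wd.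
Proof.
  intros Hw HB.
  set (B := fun q => Nat.iter q big (lo, wd)).
  assert (HBq : forall q, wpos (B q) /\ Bad (fst (B q)) (snd (B q)) /\
     (forall i, (i < N)%nat -> snd (B q) i = wd i * (/ 2) ^ q)).
  { induction q.
    - simpl. split; auto. split; auto. intros; simpl; ring.
    - destruct IHq as [W1 [B1 S1]]. change (B (S q)) with (big (B q)). unfold big.
      destruct (fold_props (seq 0 N) (B q) W1) as [_ [W2 [B2 S2]]].
      split; auto. split. apply B2; auto. intros j Hj; apply in_seq in Hj; lia.
      intros i Hi. rewrite S2 by apply seq_NoDup. destruct (in_dec Nat.eq_dec i (seq 0 N)) as [_|C].
      rewrite S1 by auto. simpl. field. exfalso; apply C, in_seq; lia. }
  assert (Hnest : forall q k, nested (B q) (B (q + k)%nat)).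
  { intros q k. induction k. rewrite Nat.add_0_r. apply nested_refl.
    eapply nested_trans; [exact IHk|]. replace (q + S k)%nat with (S (q + k))%nat by lia.
    change (B (S (q + k))%nat) with (big (B (q + k)%nat)). apply fold_props. apply HBq. }
  assert (Hlo : forall q q' i, fst (B q') i <= fst (B q) i + snd (B q) i).
  { intros q q' i. destruct (le_lt_dec q q') as [H|H].
    - replace q' with (q + (q' - q))%nat by lia. specialize (Hnest q (q' - q)%nat i).
      pose proof (proj1 (HBq (q + (q' - q))%nat) i). lra.
    - replace q with (q' + (q - q'))%nat by lia. specialize (Hnest q' (q - q')%nat i).
      pose proof (proj1 (HBq (q' + (q - q'))%nat) i). lra. }
  set (E i := fun x => exists q, x = fst (B q) i).
  assert (HE : forall i, bound (E i)).
  { intros i. exists (fst (B 0%nat) i + snd (B 0%nat) i). intros x [q ->]. apply Hlo. }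
  assert (HE' : forall i, exists x, E i x) by (intros i; exists (fst (B 0%nat) i); exists 0%nat; auto).
  set (p := fun i => proj1_sig (completeness (E i) (HE i) (HE' i))).
  assert (Hp : forall q i, fst (B q) i <= p i <= fst (B q) i + snd (B q) i).
  { intros q i. unfold p. destruct (completeness (E i) (HE i) (HE' i)) as [m [Hm1 Hm2]]. simpl.
    split. apply Hm1. exists q; auto. apply Hm2. intros x [q' ->]. apply Hlo. }
  destruct (Hloc p) as [del [Hd Hl]].
  set (W := sumR (map wd (seq 0 N)) + 1).
  assert (HW : forall i, (i < N)%nat -> wd i < W).
  { intros i Hi. unfold W. assert (wd i <= sumR (map wd (seq 0 N))).
    { apply sumR_ge_elem; auto. apply in_seq; lia. }
    lra. }
  assert (W0 : 0 < W) by (unfold W; pose proof (sumR_nonneg_f wd (seq 0 N) Hw); lra).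
  destruct (pow_lt_1_zero (/ 2)) with (y := del / W) as [q Hq].
  rewrite Rabs_right; lra. apply Rdiv_lt_0_compat; auto.
  specialize (Hq q (le_n q)). rewrite Rabs_right in Hq by (apply Rle_ge, pow_le; lra).
  apply (Hl (fst (B q)) (snd (B q))). 2: apply HBq.
  intros i Hi. split; [|apply Hp]. destruct (HBq q) as [W1 [_ S1]]. split. apply W1.
  rewrite S1 by auto.
  assert (0 <= (/2) ^ q) by (apply pow_le; lra).
  apply Rle_lt_trans with (W * (/2)^q). apply Rmult_le_compat_r; auto. left; apply HW; auto.
  apply (Rmult_lt_reg_r (/ W)). apply Rinv_0_lt_compat; auto.
  replace (W * (/2) ^ q * / W) with ((/2)^q) by (field; lra). auto.
Qed.
End Cousin.

Lemma upd_upd th j a b : upd (upd th j a) j b = upd th j b.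
Proof. apply functional_extensionality; intros i. unfold upd. destruct (Nat.eqb i j); auto. Qed.
Lemma upd_same th j : upd th j (th j) = th.
Proof. apply functional_extensionality; intros i. unfold upd. destruct (Nat.eqb_spec i j); subst; auto. Qed.
Lemma upd_eq th j a : upd th j a j = a.
Proof. unfold upd. rewrite Nat.eqb_refl. auto. Qed.

Section TF.
Variable N : nat.
Variable g : (nat -> R) -> R.
Hypothesis Hg : torus_fun N g.

Lemma tf_dep x y : (forall i, (i < N)%nat -> x i = y i) -> g x = g y.
Proof. apply Hg. Qed.

Lemma tf_per_nat th j k : (j < N)%nat -> g (upd th j (th j + 2 * PI * INR k)) = g th.
Proof.
  intros Hj. induction k.
  - simpl. rewrite Rmult_0_r, Rplus_0_r, upd_same. auto.
  - set (th' := upd th j (th j + 2 * PI * INR k)).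
    replace (upd th j (th j + 2 * PI * INR (S k))) with (upd th' j (th' j + 2 * PI)).
    rewrite (proj1 (proj2 Hg)); auto.
    unfold th'. rewrite upd_upd, upd_eq. f_equal. rewrite S_INR. ring.
Qed.

Lemma tf_per_Z th j k : (j < N)%nat -> g (upd th j (th j + 2 * PI * IZR k)) = g th.
Proof.
  intros Hj. destruct (Z_le_gt_dec 0 k).
  - replace k with (Z.of_nat (Z.to_nat k)) by lia. rewrite <- INR_IZR_INZ. apply tf_per_nat; auto.
  - set (kk := Z.to_nat (- k)).
    set (th'' := upd th j (th j + 2 * PI * IZR k)).
    rewrite <- (tf_per_nat th'' j kk Hj). unfold th''. rewrite upd_upd, upd_eq.
    replace (th j + 2 * PI * IZR k + 2 * PI * INR kk) with (th j).
    rewrite upd_same; auto. unfold kk. rewrite INR_IZR_INZ. rewrite Z2Nat.id by lia.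
    rewrite opp_IZR. ring.
Qed.

Lemma tf_shift th (s : nat -> Z) : g (fun i => th i + 2 * PI * IZR (s i)) = g th.
Proof.
  assert (H : forall p, (p <= N)%nat -> g (fun i => if Nat.ltb i p then th i + 2 * PI * IZR (s i) else th i) = g th).
  { induction p; intros Hp.
    - reflexivity.
    - set (f := fun i => if Nat.ltb i p then th i + 2 * PI * IZR (s i) else th i).
      replace (fun i => if Nat.ltb i (S p) then th i + 2 * PI * IZR (s i) else th i)
        with (upd f p (f p + 2 * PI * IZR (s p))).
      rewrite tf_per_Z by lia. apply IHp; lia.
      apply functional_extensionality; intros i. unfold upd, f.
      destruct (Nat.eqb_spec i p), (Nat.ltb_spec i (S p)), (Nat.ltb_spec i p); subst; try lia; auto.
      destruct (Nat.ltb_spec p p); try lia. auto. }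
  rewrite <- (H N (le_n N)). apply tf_dep. intros i Hi. destruct (Nat.ltb_spec i N); try lia; auto.
Qed.

Lemma reduce (x : nat -> R) : exists s : nat -> Z, forall i, 0 <= x i + 2 * PI * IZR (s i) <= 2 * PI.
Proof.
  pose proof PI_RGT_0.
  exists (fun i => (1 - up (x i / (2 * PI)))%Z). intros i.
  destruct (archimed (x i / (2 * PI))) as [H1 H2].
  rewrite minus_IZR. set (u := IZR (up (x i / (2 * PI)))) in *.
  assert (E : x i = 2 * PI * (x i / (2 * PI))) by (field; lra).
  split.
  - rewrite E at 1. assert (0 <= 2 * PI * (x i / (2 * PI) + 1 - u)).
    { apply Rmult_le_pos; lra. } nra.
  - rewrite E at 1. assert (2 * PI * (x i / (2 * PI) + 1 - u) <= 2 * PI * 1).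
    { apply Rmult_le_compat_l; lra. } nra.
Qed.

Definition inbox (lo wd x : nat -> R) := forall i, (i < N)%nat -> lo i <= x i <= lo i + wd i.

Lemma inbox_split lo wd j x : (j < N)%nat -> inbox lo wd x ->
  inbox lo (upd wd j (wd j / 2)) x \/ inbox (upd lo j (lo j + wd j / 2)) (upd wd j (wd j / 2)) x.
Proof.
  intros Hj H. destruct (Rle_dec (x j) (lo j + wd j / 2)).
  - left. intros i Hi. unfold upd. destruct (Nat.eqb_spec i j); subst; auto.
    specialize (H j Hi). lra.
  - right. intros i Hi. unfold upd. destruct (Nat.eqb_spec i j); subst; auto.
    specialize (H j Hi). lra.
Qed.

Lemma tf_UC : forall eps, 0 < eps -> exists del, 0 < del /\ forall x y,
  (forall i, (i < N)%nat -> Rabs (x i - y i) < del) -> Rabs (g x - g y) < eps.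
Proof.
  intros eps He. apply NNPP. intros Hn.
  set (Bad := fun lo wd => forall del, 0 < del -> exists x y, inbox lo wd x /\
     (forall i, (i < N)%nat -> Rabs (x i - y i) < del) /\ eps <= Rabs (g x - g y)).
  apply (cousin N Bad) with (lo := fun _ => 0) (wd := fun _ => 2 * PI).
  - intros lo wd j Hj HB. apply NNPP. intros C. apply not_or_and in C. destruct C as [C1 C2].
    apply not_all_ex_not in C1. destruct C1 as [d1 C1]. apply imply_to_and in C1. destruct C1 as [Hd1 C1].
    apply not_all_ex_not in C2. destruct C2 as [d2 C2]. apply imply_to_and in C2. destruct C2 as [Hd2 C2].
    destruct (HB (Rmin d1 d2)) as [x [y [Hx [Hxy Hge]]]]. apply Rmin_pos; auto.
    destruct (inbox_split lo wd j x Hj Hx) as [Hl|Hr].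
    + apply C1. exists x, y. split; auto. split; auto. intros i Hi. specialize (Hxy i Hi).
      pose proof (Rmin_l d1 d2). lra.
    + apply C2. exists x, y. split; auto. split; auto. intros i Hi. specialize (Hxy i Hi).
      pose proof (Rmin_r d1 d2). lra.
  - intros p. destruct (proj2 (proj2 Hg) p (eps / 2)) as [d0 [Hd0 Hc]]. lra.
    exists (d0 / 2). split. lra. intros lo wd Hbox HB.
    destruct (HB (d0 / 2)) as [x [y [Hx [Hxy Hge]]]]. lra.
    assert (Hxp : Rabs (g x - g p) < eps / 2).
    { apply Hc. intros i Hi. destruct (Hbox i Hi) as [[W1 W2] P1]. specialize (Hx i Hi).
      apply Rabs_def1; lra. }
    assert (Hyp : Rabs (g y - g p) < eps / 2).
    { apply Hc. intros i Hi. destruct (Hbox i Hi) as [[W1 W2] P1]. specialize (Hx i Hi).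
      specialize (Hxy i Hi). apply Rabs_def2 in Hxy. apply Rabs_def1; lra. }
    assert (Rabs (g x - g y) < eps).
    { replace (g x - g y) with ((g x - g p) - (g y - g p)) by ring.
      eapply Rle_lt_trans. apply Rabs_triang. rewrite Rabs_Ropp. lra. }
    lra.
  - intros; pose proof PI_RGT_0; lra.
  - intros del Hd. apply NNPP. intros C. apply Hn. exists del. split; auto.
    intros x y Hxy. apply Rnot_le_lt. intros Hge.
    destruct (reduce x) as [s Hs].
    apply C. exists (fun i => x i + 2 * PI * IZR (s i)), (fun i => y i + 2 * PI * IZR (s i)).
    split. intros i Hi. specialize (Hs i). lra.
    split. intros i Hi. replace (x i + 2 * PI * IZR (s i) - (y i + 2 * PI * IZR (s i))) with (x i - y i) by ring. auto.
    rewrite !tf_shift. auto.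
Qed.

Lemma tf_bnd : exists B, forall x, Rabs (g x) <= B.
Proof.
  apply NNPP. intros Hn.
  set (Bad := fun lo wd => forall M, exists x, inbox lo wd x /\ M < Rabs (g x)).
  apply (cousin N Bad) with (lo := fun _ => 0) (wd := fun _ => 2 * PI).
  - intros lo wd j Hj HB. apply NNPP. intros C. apply not_or_and in C. destruct C as [C1 C2].
    apply not_all_ex_not in C1. destruct C1 as [M1 C1].
    apply not_all_ex_not in C2. destruct C2 as [M2 C2].
    destruct (HB (Rmax M1 M2)) as [x [Hx HM]].
    destruct (inbox_split lo wd j x Hj Hx) as [Hl|Hr].
    + apply C1. exists x. split; auto. pose proof (Rmax_l M1 M2). lra.
    + apply C2. exists x. split; auto. pose proof (Rmax_r M1 M2). lra.
  - intros p. destruct (proj2 (proj2 Hg) p 1) as [d0 [Hd0 Hc]]. lra.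
    exists d0. split. lra. intros lo wd Hbox HB.
    destruct (HB (Rabs (g p) + 1)) as [x [Hx HM]].
    assert (Rabs (g x - g p) < 1).
    { apply Hc. intros i Hi. destruct (Hbox i Hi) as [[W1 W2] P1]. specialize (Hx i Hi).
      apply Rabs_def1; lra. }
    pose proof (Rabs_triang_inv (g x) (g p)). lra.
  - intros; pose proof PI_RGT_0; lra.
  - intros M. apply NNPP. intros C. apply Hn. exists M. intros x. apply Rnot_lt_le. intros HM.
    destruct (reduce x) as [s Hs]. apply C. exists (fun i => x i + 2 * PI * IZR (s i)).
    split. intros i Hi. specialize (Hs i). lra. rewrite tf_shift. auto.
Qed.
End TF.

Lemma Rdiv_le_0_compat a b : 0 <= a -> 0 < b -> 0 <= a / b.
Proof. intros. unfold Rdiv. apply Rmult_le_pos; auto. left; apply Rinv_0_lt_compat; auto. Qed.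

Lemma cos_period_Z z k : cos (z + 2 * PI * IZR k) = cos z.
Proof.
  destruct (Z_le_gt_dec 0 k) as [H|H].
  - replace k with (Z.of_nat (Z.to_nat k)) by lia. rewrite <- INR_IZR_INZ.
    rewrite <- (cos_period z (Z.to_nat k)). f_equal. ring.
  - replace k with (- Z.of_nat (Z.to_nat (- k)))%Z by lia. rewrite opp_IZR, <- INR_IZR_INZ.
    set (m := Z.to_nat (-k)).
    rewrite <- (cos_period (z + 2 * PI * - INR m) m). f_equal. ring.
Qed.

Lemma cos_small z d : 0 < d <= PI -> -PI <= z <= PI -> cos d < cos z -> Rabs z < d.
Proof.
  intros Hd Hz Hc. apply Rnot_le_lt. intros Hge.
  assert (cos (Rabs z) <= cos d).
  { destruct (Req_dec (Rabs z) d) as [E|E]. rewrite E; lra.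
    assert (d < Rabs z) by (destruct Hge; [auto|congruence]).
    assert (0 <= Rabs z) by apply Rabs_pos. assert (Rabs z <= PI) by (apply Rabs_le; lra).
    left. apply cos_decreasing_1; lra. }
  assert (cos (Rabs z) = cos z).
  { destruct (Rle_dec 0 z). rewrite Rabs_right; lra. rewrite Rabs_left by lra. apply cos_neg. }
  lra.
Qed.

Lemma sumR_nonneg_g (f : nat -> R) l : (forall i, In i l -> 0 <= f i) -> 0 <= sumR (map f l).
Proof. induction l; simpl; intros H. lra. pose proof (H a (or_introl eq_refl)).
  pose proof (IHl (fun i Hi => H i (or_intror Hi))). lra. Qed.
Lemma sumR_ge_elem_g (f : nat -> R) l i : (forall i, In i l -> 0 <= f i) -> In i l -> f i <= sumR (map f l).
Proof. induction l; simpl; intros H Hi. contradiction.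
  pose proof (sumR_nonneg_g f l (fun i Hi => H i (or_intror Hi))). pose proof (H a (or_introl eq_refl)).
  destruct Hi as [->|Hi]. lra. pose proof (IHl (fun i Hi => H i (or_intror Hi)) Hi). lra. Qed.

Lemma Dfun_ge N th ph j : (j < N)%nat ->
  1 - cos ((th j - ph j) - (th 0%nat - ph 0%nat)) <= Dfun N th ph.
Proof.
  intros Hj. unfold Dfun.
  assert (Hnn : forall a b, 0 <= 1 - cos (a - b)) by (intros; pose proof (COS_bound (a - b)); lra).
  eapply Rle_trans; [|apply (sumR_ge_elem_g _ _ j)].
  - apply (sumR_ge_elem_g (fun l => 1 - cos (th j - ph j - (th l - ph l)))). intros; auto. apply in_seq; lia.
  - intros i _. apply sumR_nonneg_g. intros; auto.
  - apply in_seq; lia.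
Qed.

Lemma Dfun_nonneg N th ph : 0 <= Dfun N th ph.
Proof.
  unfold Dfun. apply sumR_nonneg_g. intros. apply sumR_nonneg_g. intros.
  pose proof (COS_bound (th i - ph i - (th i0 - ph i0))). lra.
Qed.

Lemma pointwise_bound N g : (1 <= N)%nat -> torus_fun N g ->
  (forall th t, g (diag_shift th t) = g th) ->
  forall eps, 0 < eps -> exists C, 0 <= C /\ forall th ph, Rabs (g th - g ph) <= eps + C * Dfun N th ph.
Proof.
  intros HN Hg Hd eps He.
  destruct (tf_UC N g Hg eps He) as [del [Hdel HU]].
  destruct (tf_bnd N g Hg) as [B HB].
  assert (B0 : 0 <= B) by (specialize (HB (fun _ => 0)); pose proof (Rabs_pos (g (fun _ => 0))); lra).
  pose proof PI_RGT_0 as Hpi.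
  set (d1 := Rmin del PI).
  assert (Hd1 : 0 < d1 <= PI) by (unfold d1; split; [apply Rmin_pos; auto|apply Rmin_r]).
  set (eta := 1 - cos d1).
  assert (Heta : 0 < eta).
  { unfold eta. pose proof (cos_decreasing_1 0 d1 ltac:(lra) ltac:(lra) ltac:(lra) ltac:(lra) ltac:(lra)).
    rewrite cos_0 in H. lra. }
  exists (2 * B / eta). split. apply Rdiv_le_0_compat; lra.
  intros th ph.
  destruct (Rle_dec eta (Dfun N th ph)) as [Hbig|Hsmall].
  - assert (Rabs (g th - g ph) <= 2 * B).
    { eapply Rle_trans. apply Rabs_triang. rewrite Rabs_Ropp. pose proof (HB th); pose proof (HB ph); lra. }
    assert (2 * B <= 2 * B / eta * Dfun N th ph).
    { apply Rle_trans with (2 * B / eta * eta). right; field; lra.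
      apply Rmult_le_compat_l; auto. apply Rdiv_le_0_compat; lra. }
    lra.
  - apply Rnot_le_lt in Hsmall.
    set (z := fun i => (th i - ph i) - (th 0%nat - ph 0%nat)).
    destruct (reduce (fun i => z i + PI)) as [s Hs].
    assert (Hz : forall j, (j < N)%nat -> Rabs (z j + 2 * PI * IZR (s j)) < del).
    { intros j Hj. specialize (Hs j).
      assert (Rabs (z j + 2 * PI * IZR (s j)) < d1).
      { apply cos_small; auto. lra. rewrite cos_period_Z.
        pose proof (Dfun_ge N th ph j Hj). unfold z. unfold eta in Hsmall. lra. }
      pose proof (Rmin_l del PI). fold d1 in H0. lra. }
    set (x' := fun i => (ph i + (th 0%nat - ph 0%nat)) + 2 * PI * IZR (- s i)).
    assert (Ex : g x' = g ph).
    { unfold x'. rewrite (tf_shift N g Hg (fun i => ph i + (th 0%nat - ph 0%nat)) (fun i => (- s i)%Z)).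
      apply (Hd ph). }
    rewrite <- Ex.
    assert (Rabs (g th - g x') < eps).
    { apply HU. intros i Hi. unfold x'. rewrite opp_IZR.
      replace (th i - (ph i + (th 0%nat - ph 0%nat) + 2 * PI * - IZR (s i))) with (z i + 2 * PI * IZR (s i)) by (unfold z; ring).
      auto. }
    assert (0 <= 2 * B / eta * Dfun N th ph).
    { apply Rmult_le_pos. apply Rdiv_le_0_compat; lra. apply Dfun_nonneg. }
    lra.
Qed.

Lemma tf_UCg N g : torus_fun N g -> UCg g.
Proof.
  intros Hg e He. destruct (tf_UC N g Hg e He) as [d [Hd H]]. exists d. split; auto.
  intros x y Hc. left. apply H. intros i _. apply Hc.
Qed.
Lemma tf_bnd' N g : torus_fun N g -> bnd g.
Proof. intros Hg. destruct (tf_bnd N g Hg) as [B HB]. exists B; auto. Qed.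

Lemma UCg_D N th : UCg (Dfun N th).
Proof.
  unfold Dfun. apply UCg_sum. intros j _. apply UCg_sum. intros l _.
  apply (UCg_ext (fun ph => (-1) * cos ((th j - ph j) - (th l - ph l)) + 1)). intros; ring.
  apply UCg_lin. 2: apply UCg_const.
  apply (UCg_cos_lin _ 2). lra. intros x y del Hd Hc.
  replace (th j - x j - (th l - x l) - (th j - y j - (th l - y l))) with (- (x j - y j) + (x l - y l)) by ring.
  eapply Rle_trans. apply Rabs_triang. rewrite Rabs_Ropp. pose proof (Hc j). pose proof (Hc l). lra.
Qed.
Lemma bnd_D N th : bnd (Dfun N th).
Proof.
  unfold Dfun. apply bnd_sum. intros j _. apply bnd_sum. intros l _.
  apply (bnd_ext (fun ph => cos ((th j - ph j) - (th l - ph l)) * (-1) + 1)). intros; ring.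
  apply bnd_plus. apply bnd_mult. apply bnd_cos. apply bnd_const. apply bnd_const.
Qed.

Lemma comp_bound N g : (2 <= N)%nat -> torus_fun N g -> (forall th t, g (diag_shift th t) = g th) ->
  forall e, 0 < e -> exists n0, forall n, (n0 <= n)%nat -> forall th,
    Rabs (g th - haar_int N (fun ph => g ph * Pker N n th ph)) <= e.
Proof.
  intros HN Hg Hd e He.
  destruct (pointwise_bound N g ltac:(lia) Hg Hd (e / 2) ltac:(lra)) as [C [HC Hpb]].
  set (K := C * INR N * INR N * INR (N - 1)).
  assert (HK : 0 <= K) by (unfold K; repeat apply Rmult_le_pos; auto; apply pos_INR).
  exists (Nat.max 1 (Z.to_nat (up (2 * K / e)))). intros n Hn th.
  assert (Hn1 : (1 <= n)%nat) by lia.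
  assert (HnK : 2 * K / e <= INR n).
  { destruct (archimed (2 * K / e)) as [A1 _].
    assert (0 <= 2 * K / e) by (apply Rdiv_le_0_compat; lra).
    assert (IZR (up (2 * K / e)) <= INR n).
    { assert (0 <= up (2 * K / e))%Z by (apply le_IZR; lra).
      rewrite <- (Z2Nat.id (up _)) by auto. rewrite <- INR_IZR_INZ. apply le_INR. lia. }
    lra. }
  pose proof (UCg_Pker N n th) as UP. pose proof (bnd_Pker N n th) as BP.
  pose proof (tf_UCg N g Hg) as UG. pose proof (tf_bnd' N g Hg) as BG.
  set (P := Pker N n th) in *.
  assert (UGP : UCg (fun ph => g ph * P ph)) by (apply UCg_mult; auto).
  set (h := fun ph => (g th - g ph) * P ph).
  assert (Uh : UCg h).
  { unfold h. apply UCg_mult; auto. apply (UCg_ext (fun x => (-1) * g x + g th)). intros; ring.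
    apply UCg_lin; auto. apply UCg_const.
    apply (bnd_ext (fun x => g x * (-1) + g th)). intros; ring. apply bnd_plus. apply bnd_mult; auto.
    apply bnd_const. apply bnd_const. }
  assert (E1 : g th - haar_int N (fun ph => g ph * P ph) = haar_int N h).
  { unfold haar_int, h. rewrite (IntTorus_ext N (fun ph => (g th - g ph) * P ph) (fun x => g th * P x + (-1) * (g x * P x))).
    rewrite IntTorus_lin, IntTorus_scal; auto. fold (haar_int N P). unfold P. rewrite Pker_int1 by lia. ring.
    apply UCg_scal; auto. intros; ring. }
  rewrite E1.
  assert (UD : UCg (fun ph => P ph * Dfun N th ph)) by (apply UCg_mult; auto; [apply UCg_D|apply bnd_D]).
  assert (Hup : haar_int N (fun ph => Rabs (h ph)) <= e / 2 * 1 + C * haar_int N (fun ph => P ph * Dfun N th ph)).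
  { unfold haar_int. rewrite <- (Pker_int1 N n th) by lia. unfold haar_int. fold P.
    rewrite <- !IntTorus_scal by auto. rewrite <- IntTorus_plus by (auto; apply UCg_scal; auto).
    apply IntTorus_le. apply UCg_abs; auto. apply UCg_plus; apply UCg_scal; auto.
    intros ph. unfold h. rewrite Rabs_mult.
    assert (0 <= P ph) by (unfold P, Pker; destruct N as [|m]; [lia|]; replace (S m - 1)%nat with m by lia; apply sigma_re_nonneg).
    rewrite (Rabs_right (P ph)) by lra. specialize (Hpb th ph).
    apply Rle_trans with ((e / 2 + C * Dfun N th ph) * P ph). apply Rmult_le_compat_r; auto.
    right; ring. }
  pose proof (PD_int N n th HN Hn1) as HPD. fold P in HPD.
  assert (C * haar_int N (fun ph => P ph * Dfun N th ph) <= e / 2).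
  { apply Rle_trans with (C * (INR N * INR N * (INR (N - 1) / (INR n + INR (N - 1))))).
    apply Rmult_le_compat_l; auto.
    assert (0 < INR n) by (apply lt_0_INR; lia). pose proof (pos_INR (N - 1)).
    apply Rle_trans with (K / INR n).
    - unfold K. unfold Rdiv. rewrite <- !Rmult_assoc. apply Rmult_le_compat_l.
      repeat apply Rmult_le_pos; auto; apply pos_INR.
      apply Rinv_le_contravar; lra.
    - apply (Rmult_le_reg_r (INR n)); auto. unfold Rdiv. rewrite Rmult_assoc, Rinv_l by lra.
      apply (Rmult_le_reg_l (2 / e)). apply Rdiv_lt_0_compat; lra.
      replace (2 / e * (K * 1)) with (2 * K / e) by (field; lra).
      replace (2 / e * (e * / 2 * INR n)) with (INR n) by (field; lra). auto. }
  assert (Habs : Rabs (haar_int N h) <= haar_int N (fun ph => Rabs (h ph))).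
  { apply Rabs_le. split.
    - unfold haar_int. rewrite <- (Rmult_1_l (IntTorus N (fun ph => Rabs (h ph)) _)).
      rewrite Ropp_mult_distr_l, <- IntTorus_scal by (apply UCg_abs; auto).
      apply IntTorus_le; auto. apply UCg_scal, UCg_abs; auto.
      intros x. pose proof (Rabs_pos (h x)). pose proof (Rle_abs (- h x)). rewrite Rabs_Ropp in H1. lra.
    - apply IntTorus_le; auto. apply UCg_abs; auto. intros; apply Rle_abs. }
  lra.
Qed.

Theorem proposition4p8 (N : nat) (fr fi : (nat -> R) -> R) :
  (2 <= N)%nat ->
  torus_fun N fr -> torus_fun N fi ->
  (forall th t, fr (diag_shift th t) = fr th /\ fi (diag_shift th t) = fi th) ->
  forall eps, 0 < eps -> exists n0 : nat, forall n : nat, (n0 <= n)%nat ->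
    forall th : nat -> R,
      sqrt ((fr th - conv_re N n (INR (N - 1)) fr fi th) ^ 2
            + (fi th - conv_im N n (INR (N - 1)) fr fi th) ^ 2) <= eps.
Proof.
  intros HN Hr Hi Hd eps He.
  destruct (comp_bound N fr HN Hr (fun th t => proj1 (Hd th t)) (eps / 2) ltac:(lra)) as [n1 H1].
  destruct (comp_bound N fi HN Hi (fun th t => proj2 (Hd th t)) (eps / 2) ltac:(lra)) as [n2 H2].
  exists (Nat.max n1 n2). intros n Hn th.
  assert (Ere : conv_re N n (INR (N - 1)) fr fi th = haar_int N (fun ph => fr ph * Pker N n th ph)).
  { unfold conv_re, haar_int. apply IntTorus_ext. intros ph. unfold Pker.
    destruct N as [|m]; [lia|]. replace (S m - 1)%nat with m by lia. rewrite sigma_im_zero. ring. }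
  assert (Eim : conv_im N n (INR (N - 1)) fr fi th = haar_int N (fun ph => fi ph * Pker N n th ph)).
  { unfold conv_im, haar_int. apply IntTorus_ext. intros ph. unfold Pker.
    destruct N as [|m]; [lia|]. replace (S m - 1)%nat with m by lia. rewrite sigma_im_zero. ring. }
  rewrite Ere, Eim.
  specialize (H1 n ltac:(lia) th). specialize (H2 n ltac:(lia) th).
  set (a := fr th - haar_int N (fun ph => fr ph * Pker N n th ph)) in *.
  set (b := fi th - haar_int N (fun ph => fi ph * Pker N n th ph)) in *.
  apply Rle_trans with (sqrt ((Rabs a + Rabs b) ^ 2)).
  - apply sqrt_le_1_alt. pose proof (Rabs_pos a). pose proof (Rabs_pos b).
    replace (a ^ 2) with (Rabs a ^ 2) by apply pow2_abs.
    replace (b ^ 2) with (Rabs b ^ 2) by apply pow2_abs.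
    assert (0 <= Rabs a * Rabs b) by (apply Rmult_le_pos; auto). nra.
  - rewrite sqrt_pow2. lra. pose proof (Rabs_pos a). pose proof (Rabs_pos b). lra.
Qed.
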